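(* Let $A$ be a cirquent and let $B$ be a purification of $A$ (a final output of the Purification procedure applied to $A$). Then: (1) if $B$ is provable in $\mathbf{CL16}$, then so is $A$; (2) $A$ is valid iff $B$ is valid; (3) $B$ is pure; (4) $\overline{B}\le\overline{A}$.
   Context: Cirquents. Fix elementary letters $p,q,\dots$; literals are $p$ and $\neg p$. Fix disjoint infinite sets of disjunctive and conjunctive clusters. Cirquents: $\top,\bot$ and literals; if $A,B$ are cirquents then so are $A\vee B$, $A\wedge B$, $A\sqcap^cB$ ($c$ conjunctive), $A\sqcup^cB$ ($c$ disjunctive). A cluster $c$ occurs in a cirquent if some $\sqcup^c$ or $\sqcap^c$ occurs in it. A surface occurrence is one not in the scope of any choice connective. Semantics and validity. LegRuns is the set of (finite or infinite) sequences of labeled moves (each labeled $\top$ = machine or $\bot$ = environment) in which every move is $c.0$ or $c.1$ for a cluster $c$, moves in disjunctive clusters are $\top$-labeled, moves in conjunctive clusters are $\bot$-labeled, and each cluster has at most one move. For $\Gamma\in$ LegRuns, $A\sqcup^cB$ or $A\sqcap^cB$ is resolved if $\Gamma$ contains $c.0$ or $c.1$, with resolvent $A$ or $B$. An interpretation $^*$ assigns each letter a value in $\{\top,\bot\}$. $C^*$ is the game with legal runs LegRuns, a legal run $\Gamma$ being won by $\top$ iff: $C=\top$; or $C$ is $p$ (resp. $\neg p$) with $p^*=\top$ (resp. $\bot$); or $C=A_0\vee A_1$ and $\Gamma$ is won in some $A_i$; or $C=A_0\wedge A_1$ and won in both; or $C=A_0\sqcup^cA_1$ is resolved and $\Gamma$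 is won in the resolvent; or $C=A_0\sqcap^cA_1$ and it is unresolved or $\Gamma$ is won in the resolvent. Illegal runs are lost by the player who made the first illegal move. An HPM is a Turing machine with an extra read-only run tape showing the current run, able to make moves, against an environment that may move at any time; it solves a game if all runs it generates are won by $\top$. $C$ is valid if one HPM solves $C^*$ for all interpretations $^*$. Rules of $\mathbf{CL16}$ (premise(s) $\leadsto$ conclusion; $X[E_1,\dots,E_n]$ denotes a cirquent with fixed subcirquents $E_i$, $X[F_1,\dots,F_n]$ replaces all occurrences of the $E_i$ by the $F_i$, the conclusion setting the context): Commutativity $X[B\vee A]\leadsto X[A\vee B]$, $X[B\wedge A]\leadsto X[A\wedge B]$; Associativity $X[A\vee(B\vee C)]\leadsto X[(A\vee B)\vee C]$, $X[A\wedge(B\wedge C)]\leadsto X[(A\wedge B)\wedge C]$; Identity $X[A]\leadsto X[A\vee\bot]$, $X[A]\leadsto X[A\wedge\top]$; Domination $X[\top]\leadsto X[A\vee\top]$, $X[\bot]\leadsto X[A\wedge\bot]$; Choosing $X[A_1,\dots,A_n]\leadsto X[A_1\sqcup^cB_1,\dots,A_n\sqcup^cB_n]$ and $X[B_1,\dots,B_n]\leadsto X[A_1\sqcup^cB_1,\dots,A_n\sqcup^cB_n]$ where the $A_i\sqcup^cB_i$ are all $\sqcup^c$-rooted subcirquents of the conclusion; Cleansing $X[Y[A]\sqcap^cC]\leadsto X[Y[A\sqcap^cB]\sqcap^cC]$, $X[C\sqcap^cY[B]]\leadsto X[C\sqcap^cY[A\sqcap^cB]]$; Distribution $X[(A\vee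 C)\wedge(B\vee C)]\leadsto X[(A\wedge B)\vee C]$, $X[(A\vee C)\sqcap^c(B\vee C)]\leadsto X[(A\sqcap^cB)\vee C]$; Trivialization $X[\top]\leadsto X[\neg p\vee p]$; Quadrilemma $X\big[\big((A\wedge(C\sqcap^bD))\sqcap^a(B\wedge(C\sqcap^bD))\big)\sqcap^c\big(((A\sqcap^aB)\wedge C)\sqcap^b((A\sqcap^aB)\wedge D)\big)\big]\leadsto X[(A\sqcap^aB)\wedge(C\sqcap^bD)]$ with $c$ not in the conclusion; Splitting $A,\ B\leadsto A\sqcap^cB$ with $c$ in neither $A$ nor $B$. A proof of $C$ is a sequence $C_1=\top,\dots,C_n=C$ each of whose members after the first follows from earlier ones by a rule. Rank: tetration ${}^1a=a$, ${}^{n+1}a=a^{({}^na)}$; $\overline{C}=1$ for $\top,\bot$, literals; $\overline{A\sqcup^cB}=\overline{A\sqcap^cB}=\overline{A}+\overline{B}$; $\overline{A\wedge B}=5^{\overline{A}+\overline{B}}$; $\overline{A\vee B}={}^{(\overline{A}+\overline{B})}5$. Pure: a cirquent $D$ is pure iff (1) $D$ has no surface occurrence of $\bot$ unless $D=\bot$; (2) no surface occurrence of $\wedge$ is in the scope of $\vee$; (3) no surface occurrence of any $\sqcap^c$ is in the scope of $\vee$; (4) there is no surface occurrence of $A_1\vee\dots\vee A_n$ with both $p$ and $\neg p$ among $A_1,\dots,A_n$ for some letter $p$; (5) no surface occurrence of $\top$ unless $D=\top$; (6) if $D$ is $A_1\wedge\dots\wedge A_n$ ($n\ge2$, any bracketing)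 then some $A_i$ is not of the form $B\sqcap^cC$; (7) if $D$ is $A\sqcap^cB$ then neither $A$ nor $B$ contains $c$. Purification procedure applied to $D$: Stages 1–7 in order, each a loop iterated until it no longer modifies $D$; the final $D$ is returned. Stage 1: a surface occurrence of $\bot\vee A$ or $A\vee\bot$ is changed to $A$; next, of $\bot\wedge A$ or $A\wedge\bot$ to $\bot$. Stage 2: a surface occurrence of $(A\wedge B)\vee C$ or $C\vee(A\wedge B)$ is changed to $(A\vee C)\wedge(B\vee C)$. Stage 3: a surface occurrence of $(A\sqcap^cB)\vee C$ or $C\vee(A\sqcap^cB)$ is changed to $(A\vee C)\sqcap^c(B\vee C)$. Stage 4: a surface occurrence of $A_1\vee\dots\vee A_n$ with both $p,\neg p$ among the $A_i$ is changed to $\top$. Stage 5: a surface occurrence of $\top\vee A$ or $A\vee\top$ is changed to $\top$; next, of $\top\wedge A$ or $A\wedge\top$ to $A$. Stage 6: a surface occurrence of $(A\sqcap^aB)\wedge(E\sqcap^bF)$ is changed to $\big((A\wedge(E\sqcap^bF))\sqcap^a(B\wedge(E\sqcap^bF))\big)\sqcap^c\big(((A\sqcap^aB)\wedge E)\sqcap^b((A\sqcap^aB)\wedge F)\big)$ with $c$ a conjunctive cluster not occurring in $D$. Stage 7: if $D$ is $X[E\sqcap^cF]\sqcap^cA$ (resp. $A\sqcap^cX[E\sqcap^cF]$), change it to $X[E]\sqcap^cA$ (resp. $A\sqcap^cX[F]$). *)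

(* Defs.v *)
From Stdlib Require Import List Arith PeanoNat.
Import ListNotations.

Inductive cluster : Type := CConj (n : nat) | CDisj (n : nat).

(* Letters are natural numbers.
   [CCap c A B] is  A ⊓^c B  where c denotes the conjunctive cluster [CConj c];
   [CCup c A B] is  A ⊔^c B  where c denotes the disjunctive cluster [CDisj c]. *)
Inductive cirq : Type :=
| CTop | CBot
| CPos (p : nat)
| CNeg (p : nat)
| COr  (A B : cirq)
| CAnd (A B : cirq)
| CCap (c : nat) (A B : cirq)
| CCup (c : nat) (A B : cirq).

Fixpoint occurs (k : cluster) (C : cirq) : Prop :=
  match C with
  | COr A B | CAnd A B => occurs k A \/ occurs k B
  | CCap c A B => k = CConj c \/ occurs k A \/ occurs k B
  | CCup c A B => k = CDisj c \/ occurs k A \/ occurs k B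
  | _ => False
  end.

Inductive ctx : Type :=
| Hole
| XOrL (X : ctx) (B : cirq) | XOrR (A : cirq) (X : ctx)
| XAndL (X : ctx) (B : cirq) | XAndR (A : cirq) (X : ctx)
| XCapL (c : nat) (X : ctx) (B : cirq) | XCapR (c : nat) (A : cirq) (X : ctx)
| XCupL (c : nat) (X : ctx) (B : cirq) | XCupR (c : nat) (A : cirq) (X : ctx).

Fixpoint plug (X : ctx) (E : cirq) : cirq :=
  match X with
  | Hole => E
  | XOrL X B => COr (plug X E) B
  | XOrR A X => COr A (plug X E)
  | XAndL X B => CAnd (plug X E) B
  | XAndR A X => CAnd A (plug X E)
  | XCapL c X B => CCap c (plug X E) B
  | XCapR c A X => CCap c A (plug X E)
  | XCupL c X B => CCup c (plug X E) B
  | XCupR c A X => CCup c A (plug X E)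
  end.

Fixpoint surface_ctx (X : ctx) : Prop :=
  match X with
  | Hole => True
  | XOrL X _ | XOrR _ X | XAndL X _ | XAndR _ X => surface_ctx X
  | _ => False
  end.

Fixpoint choose (c : nat) (b : bool) (C : cirq) : cirq :=
  match C with
  | COr A B => COr (choose c b A) (choose c b B)
  | CAnd A B => CAnd (choose c b A) (choose c b B)
  | CCap d A B => CCap d (choose c b A) (choose c b B)
  | CCup d A B =>
      if Nat.eqb d c then choose c b (if b then B else A)
      else CCup d (choose c b A) (choose c b B)
  | _ => C
  end.

Definition quad (a b c : nat) (A B C D : cirq) : cirq :=
  CCap c (CCap a (CAnd A (CCap b C D)) (CAnd B (CCap b C D)))
         (CCap b (CAnd (CCap a A B) C) (CAnd (CCap a A B) D)).

(* One-premise rules of CL16: [rule1 P C] means premise P ⤳ conclusion C. *)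
Inductive rule1 : cirq -> cirq -> Prop :=
| r_comm_or X A B : rule1 (plug X (COr B A)) (plug X (COr A B))
| r_comm_and X A B : rule1 (plug X (CAnd B A)) (plug X (CAnd A B))
| r_assoc_or X A B C :
    rule1 (plug X (COr A (COr B C))) (plug X (COr (COr A B) C))
| r_assoc_and X A B C :
    rule1 (plug X (CAnd A (CAnd B C))) (plug X (CAnd (CAnd A B) C))
| r_id_or X A : rule1 (plug X A) (plug X (COr A CBot))
| r_id_and X A : rule1 (plug X A) (plug X (CAnd A CTop))
| r_dom_or X A : rule1 (plug X CTop) (plug X (COr A CTop))
| r_dom_and X A : rule1 (plug X CBot) (plug X (CAnd A CBot))
| r_choose c b C : occurs (CDisj c) C -> rule1 (choose c b C) C
| r_cleanse_l X Y c A B C :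
    rule1 (plug X (CCap c (plug Y A) C)) (plug X (CCap c (plug Y (CCap c A B)) C))
| r_cleanse_r X Y c A B C :
    rule1 (plug X (CCap c C (plug Y B))) (plug X (CCap c C (plug Y (CCap c A B))))
| r_distr_and X A B C :
    rule1 (plug X (CAnd (COr A C) (COr B C))) (plug X (COr (CAnd A B) C))
| r_distr_cap X c A B C :
    rule1 (plug X (CCap c (COr A C) (COr B C))) (plug X (COr (CCap c A B) C))
| r_triv X p : rule1 (plug X CTop) (plug X (COr (CNeg p) (CPos p)))
| r_quad X a b c A B C D :
    ~ occurs (CConj c) (plug X (CAnd (CCap a A B) (CCap b C D))) ->
    rule1 (plug X (quad a b c A B C D)) (plug X (CAnd (CCap a A B) (CCap b C D))).

Inductive provable : cirq -> Prop :=
| prov_top : provable CTop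
| prov_rule P C : provable P -> rule1 P C -> provable C
| prov_split c A B :
    provable A -> provable B -> ~ occurs (CConj c) A -> ~ occurs (CConj c) B ->
    provable (CCap c A B).

Definition move : Type := (cluster * bool)%type.          (* c.0 = (c,false), c.1 = (c,true) *)
Definition lmove : Type := (bool * move)%type.            (* label: true = ⊤, false = ⊥ *)

Definition lmove_legal (m : lmove) : Prop :=
  match m with
  | (true, (CDisj _, _)) => True
  | (false, (CConj _, _)) => True
  | _ => False
  end.

Definition legal (L : list lmove) : Prop :=
  Forall lmove_legal L /\ NoDup (map (fun m : lmove => fst (snd m)) L).

(* winning a legal run, given which moves the run contains *)
Fixpoint wins (has : cluster -> bool -> Prop) (i : nat -> bool) (C : cirq) : Prop :=
  match C with
  | CTop => True
  | CBot => False
  | CPos p => i p = true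
  | CNeg p => i p = false
  | COr A B => wins has i A \/ wins has i B
  | CAnd A B => wins has i A /\ wins has i B
  | CCup c A B =>
      (has (CDisj c) false /\ wins has i A) \/ (has (CDisj c) true /\ wins has i B)
  | CCap c A B =>
      (~ has (CConj c) false /\ ~ has (CConj c) true)
      \/ (has (CConj c) false /\ wins has i A) \/ (has (CConj c) true /\ wins has i B)
  end.

(* Abstract HPM: at round r, seeing the current run, it may make one move. *)
Definition machine : Type := nat -> list lmove -> option move.
(* Environment: at round r it makes a finite list of moves. *)
Definition envir : Type := nat -> list move.

Fixpoint run_upto (M : machine) (e : envir) (r : nat) : list lmove :=
  match r with
  | 0 => []
  | S r' =>
      let p := run_upto M e r' ++ map (fun m => (false, m)) (e r') in
      p ++ match M r' p with Some m => [(true, m)] | None => [] end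
  end.

Definition run_prefix (M : machine) (e : envir) (L : list lmove) : Prop :=
  exists r s, L ++ s = run_upto M e r.

Definition in_run (M : machine) (e : envir) (c : cluster) (b : bool) : Prop :=
  exists L l, run_prefix M e L /\ In (l, (c, b)) L.

Definition top_wins (i : nat -> bool) (C : cirq) (M : machine) (e : envir) : Prop :=
  (exists L x, run_prefix M e (L ++ [x]) /\ legal L /\ ~ legal (L ++ [x]) /\ fst x = false)
  \/ ((forall L, run_prefix M e L -> legal L) /\ wins (in_run M e) i C).

Definition valid (C : cirq) : Prop :=
  exists M : machine, forall (i : nat -> bool) (e : envir), top_wins i C M e.

Fixpoint tet (n a : nat) : nat :=
  match n with 0 => 1 | S m => a ^ tet m a end.

Fixpoint rank (C : cirq) : nat :=
  match C with
  | CCap _ A B | CCup _ A B => rank A + rank B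
  | CAnd A B => 5 ^ (rank A + rank B)
  | COr A B => tet (rank A + rank B) 5
  | _ => 1
  end.

Fixpoint surf (P : cirq -> Prop) (D : cirq) : Prop :=
  P D \/ match D with COr A B | CAnd A B => surf P A \/ surf P B | _ => False end.

(* L is one of the disjuncts A_i of some bracketing E = A_1 ∨ ... ∨ A_n *)
Fixpoint disj_has (E L : cirq) : Prop :=
  E = L \/ match E with COr A B => disj_has A L \/ disj_has B L | _ => False end.

Definition is_and (E : cirq) : Prop := match E with CAnd _ _ => True | _ => False end.
Definition is_cap (E : cirq) : Prop := match E with CCap _ _ _ => True | _ => False end.

(* E = A_1 ∧ ... ∧ A_n (n >= 1) with every A_i ⊓-rooted *)
Fixpoint conj_all_cap (E : cirq) : Prop :=
  match E with
  | CCap _ _ _ => True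
  | CAnd A B => conj_all_cap A /\ conj_all_cap B
  | _ => False
  end.

Definition pure (D : cirq) : Prop :=
  (D <> CBot -> ~ surf (fun E => E = CBot) D)
  /\ ~ surf (fun E => match E with COr A B => surf is_and A \/ surf is_and B | _ => False end) D
  /\ ~ surf (fun E => match E with COr A B => surf is_cap A \/ surf is_cap B | _ => False end) D
  /\ ~ surf (fun E => exists p, disj_has E (CPos p) /\ disj_has E (CNeg p)) D
  /\ (D <> CTop -> ~ surf (fun E => E = CTop) D)
  /\ (forall A B, D = CAnd A B -> ~ (conj_all_cap A /\ conj_all_cap B))
  /\ (forall c A B, D = CCap c A B -> ~ occurs (CConj c) A /\ ~ occurs (CConj c) B).

Definition surf_change (pat : cirq -> cirq -> Prop) (D D' : cirq) : Prop :=
  exists X E E', surface_ctx X /\ pat E E' /\ D = plug X E /\ D' = plug X E'.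

Definition s1a := surf_change (fun E E' => exists A, (E = COr CBot A \/ E = COr A CBot) /\ E' = A).
Definition s1b := surf_change (fun E E' => exists A, (E = CAnd CBot A \/ E = CAnd A CBot) /\ E' = CBot).
Definition s2 := surf_change (fun E E' => exists A B C,
  (E = COr (CAnd A B) C \/ E = COr C (CAnd A B)) /\ E' = CAnd (COr A C) (COr B C)).
Definition s3 := surf_change (fun E E' => exists c A B C,
  (E = COr (CCap c A B) C \/ E = COr C (CCap c A B)) /\ E' = CCap c (COr A C) (COr B C)).
Definition s4 := surf_change (fun E E' =>
  (exists p, disj_has E (CPos p) /\ disj_has E (CNeg p)) /\ E' = CTop).
Definition s5a := surf_change (fun E E' => exists A, (E = COr CTop A \/ E = COr A CTop) /\ E' = CTop).
Definition s5b := surf_change (fun E E' => exists A, (E = CAnd CTop A \/ E = CAnd A CTop) /\ E' = A).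
Definition s6 (D D' : cirq) : Prop :=
  exists c, ~ occurs (CConj c) D /\
  surf_change (fun E E' => exists a b A B E1 F1,
     E = CAnd (CCap a A B) (CCap b E1 F1) /\ E' = quad a b c A B E1 F1) D D'.
Definition s7 (D D' : cirq) : Prop :=
  exists X c E F A,
    (D = CCap c (plug X (CCap c E F)) A /\ D' = CCap c (plug X E) A)
    \/ (D = CCap c A (plug X (CCap c E F)) /\ D' = CCap c A (plug X F)).

Definition opt (s : cirq -> cirq -> Prop) (D D' : cirq) : Prop :=
  s D D' \/ ((forall D'', ~ s D D'') /\ D' = D).

Definition iter2 (s t : cirq -> cirq -> Prop) (D D' : cirq) : Prop :=
  exists D1, opt s D D1 /\ opt t D1 D'.

Inductive loop (it : cirq -> cirq -> Prop) : cirq -> cirq -> Prop :=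
| loop_done D : it D D -> loop it D D
| loop_step D D1 D2 : it D D1 -> D1 <> D -> loop it D1 D2 -> loop it D D2.

Definition purification (A B : cirq) : Prop :=
  exists D1 D2 D3 D4 D5 D6,
    loop (iter2 s1a s1b) A D1 /\ loop (opt s2) D1 D2 /\ loop (opt s3) D2 D3 /\
    loop (opt s4) D3 D4 /\ loop (iter2 s5a s5b) D4 D5 /\ loop (opt s6) D5 D6 /\
    loop (opt s7) D6 B.

(* Main.v *)
Require Import Defs.
From Stdlib Require Import List Arith PeanoNat Lia Classical Bool.
Import ListNotations.

Fixpoint comp (X Y : ctx) : ctx :=
  match X with
  | Hole => Y
  | XOrL X B => XOrL (comp X Y) B
  | XOrR A X => XOrR A (comp X Y)
  | XAndL X B => XAndL (comp X Y) B
  | XAndR A X => XAndR A (comp X Y)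
  | XCapL c X B => XCapL c (comp X Y) B
  | XCapR c A X => XCapR c A (comp X Y)
  | XCupL c X B => XCupL c (comp X Y) B
  | XCupR c A X => XCupR c A (comp X Y)
  end.

Lemma plug_comp X Y E : plug (comp X Y) E = plug X (plug Y E).
Proof. induction X; simpl; congruence. Qed.

Fixpoint csize (C : cirq) : nat :=
  match C with
  | COr A B | CAnd A B | CCap _ A B | CCup _ A B => S (csize A + csize B)
  | _ => 1
  end.

Lemma size_plug_lt X E E' : csize E' < csize E -> csize (plug X E') < csize (plug X E).
Proof. induction X; simpl; lia. Qed.

Lemma occurs_plug k X E : occurs k E -> occurs k (plug X E).
Proof. induction X; simpl; tauto. Qed.

Definition impl (F1 F2 : cirq) := forall X, provable (plug X F1) -> provable (plug X F2).

Lemma impl_refl F : impl F F.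
Proof. intros X H; exact H. Qed.
Lemma impl_trans F1 F2 F3 : impl F1 F2 -> impl F2 F3 -> impl F1 F3.
Proof. intros H1 H2 X H; auto. Qed.
Lemma impl_ctx Y F1 F2 : impl F1 F2 -> impl (plug Y F1) (plug Y F2).
Proof. intros H X HP. rewrite <- !plug_comp. apply H. rewrite plug_comp; exact HP. Qed.

Lemma impl_comm_or A B : impl (COr B A) (COr A B).
Proof. intros X H. eapply prov_rule; [exact H| apply r_comm_or]. Qed.
Lemma impl_comm_and A B : impl (CAnd B A) (CAnd A B).
Proof. intros X H. eapply prov_rule; [exact H| apply r_comm_and]. Qed.
Lemma impl_assoc A B C : impl (COr A (COr B C)) (COr (COr A B) C).
Proof. intros X H. eapply prov_rule; [exact H| apply r_assoc_or]. Qed.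


Lemma impl_rassoc A B C : impl (COr (COr A B) C) (COr A (COr B C)).
Proof.
  apply impl_trans with (COr C (COr A B)); [apply impl_comm_or|].
  apply impl_trans with (COr (COr C A) B); [apply impl_assoc|].
  apply impl_trans with (COr B (COr C A)); [apply impl_comm_or|].
  apply impl_trans with (COr (COr B C) A); [apply impl_assoc|].
  apply impl_comm_or.
Qed.

Definition good F := impl CTop F.

Lemma good_impl F1 F2 : good F1 -> impl F1 F2 -> good F2.
Proof. intros; eapply impl_trans; eauto. Qed.

Lemma good_weak_l F G : good F -> good (COr F G).
Proof.
  intros H X HP.
  assert (H1 : provable (plug X (COr G CTop))).
  { eapply prov_rule; [exact HP| apply r_dom_or]. }
  assert (H2 : provable (plug X (COr CTop G))).
  { apply impl_comm_or; exact H1. }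
  change (COr F G) with (plug (XOrL Hole G) F).
  rewrite <- plug_comp. apply H. rewrite plug_comp. exact H2.
Qed.

Lemma good_weak_r F G : good F -> good (COr G F).
Proof. intros H. eapply good_impl; [apply good_weak_l; exact H| apply impl_comm_or]. Qed.

Lemma good_ext E1 L : disj_has E1 L -> forall G, good (COr L G) -> good (COr E1 G).
Proof.
  induction E1; simpl; intros HD G HG;
    try (destruct HD as [HD|[]]; subst; exact HG).
  destruct HD as [HD|[HD|HD]]; [subst; exact HG| |].
  -
    apply good_impl with (COr E1_1 (COr E1_2 G)); [|apply impl_assoc].
    apply IHE1_1; auto.
    apply good_impl with (COr L (COr G E1_2)).
    + apply good_impl with (COr (COr L G) E1_2); [apply good_weak_l; auto| apply impl_rassoc].
    + apply (impl_ctx (XOrR L Hole)). apply impl_comm_or.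
  - apply good_impl with (COr (COr E1_2 E1_1) G).
    + apply good_impl with (COr E1_2 (COr E1_1 G)); [|apply impl_assoc].
      apply IHE1_2; auto.
      apply good_impl with (COr L (COr G E1_1)).
      * apply good_impl with (COr (COr L G) E1_1); [apply good_weak_l; auto| apply impl_rassoc].
      * apply (impl_ctx (XOrR L Hole)). apply impl_comm_or.
    + apply (impl_ctx (XOrL Hole G)). apply impl_comm_or.
Qed.

Lemma good_triv p : good (COr (CNeg p) (CPos p)).
Proof. intros X H. eapply prov_rule; [exact H| apply r_triv]. Qed.

Lemma good_pn E p : disj_has E (CPos p) -> disj_has E (CNeg p) -> good E.
Proof.
  induction E; simpl; intros H1 H2;
    try (destruct H1 as [H1|[]]; destruct H2 as [H2|[]]; congruence).
  destruct H1 as [H1|[H1|H1]]; [discriminate| |];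
  destruct H2 as [H2|[H2|H2]]; try discriminate.
  - apply good_weak_l; auto.
  - apply good_ext with (CPos p); auto.
    eapply good_impl; [|apply impl_comm_or].
    apply good_ext with (CNeg p); auto. apply good_triv.
  - apply good_ext with (CNeg p); auto.
    eapply good_impl; [|apply impl_comm_or].
    apply good_ext with (CPos p); auto.
    eapply good_impl; [apply good_triv| apply impl_comm_or].
  - apply good_weak_r; auto.
Qed.

Lemma pow5_pos x : 1 <= 5 ^ x.
Proof. pose proof (Nat.pow_gt_lin_r 5 x); lia. Qed.

Lemma pow5_gt x : x < 5 ^ x.
Proof. apply Nat.pow_gt_lin_r; lia. Qed.

Lemma pow5_2x x : 2 * x <= 5 ^ x.
Proof.
  induction x; simpl; [lia|]. pose proof (pow5_pos x). lia.
Qed.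

Lemma tet_pos n : 1 <= tet n 5.
Proof. destruct n; simpl; [lia| apply pow5_pos]. Qed.

Lemma tet_step n : tet n 5 <= tet (S n) 5.
Proof.
  induction n; simpl in *; [lia|].
  apply Nat.pow_le_mono_r; lia.
Qed.

Lemma tet_mono n m : n <= m -> tet n 5 <= tet m 5.
Proof.
  induction 1; [lia|]. pose proof (tet_step m); lia.
Qed.

Lemma tet_ge n : n <= tet n 5.
Proof.
  induction n; simpl; [lia|]. pose proof (pow5_gt (tet n 5)); lia.
Qed.

Lemma tet_double n : 2 * tet n 5 <= tet (S n) 5.
Proof. simpl. apply pow5_2x. Qed.

Lemma rank_pos C : 1 <= rank C.
Proof. induction C; simpl; try lia; auto using tet_pos, pow5_pos. Qed.

Lemma rank_plug_mono X E E' : rank E' <= rank E -> rank (plug X E') <= rank (plug X E).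
Proof.
  induction X; simpl; intros H; try specialize (IHX H); try lia.
  - apply tet_mono; lia.
  - apply tet_mono; lia.
  - apply Nat.pow_le_mono_r; lia.
  - apply Nat.pow_le_mono_r; lia.
Qed.

Lemma rank_s2 a b c : 1 <= a -> 1 <= b -> 1 <= c ->
  5 ^ (tet (a + c) 5 + tet (b + c) 5) <= tet (5 ^ (a + b) + c) 5.
Proof.
  intros Ha Hb Hc.
  pose proof (pow5_gt (a + b)) as Hp.
  assert (Hm : 5 ^ (a + b) + c = S (5 ^ (a + b) + c - 1)) by lia.
  rewrite Hm. simpl. apply Nat.pow_le_mono_r; [lia|].
  set (n := Nat.max a b + c).
  pose proof (tet_mono (a + c) n ltac:(lia)).
  pose proof (tet_mono (b + c) n ltac:(lia)).
  pose proof (tet_double n).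
  pose proof (tet_mono (S n) (5 ^ (a + b) + c - 1) ltac:(lia)).
  lia.
Qed.

Lemma rank_s3 a b c : 1 <= a -> 1 <= b -> 1 <= c ->
  tet (a + c) 5 + tet (b + c) 5 <= tet (a + b + c) 5.
Proof.
  intros Ha Hb Hc.
  set (n := Nat.max a b + c).
  pose proof (tet_mono (a + c) n ltac:(lia)).
  pose proof (tet_mono (b + c) n ltac:(lia)).
  pose proof (tet_double n).
  pose proof (tet_mono (S n) (a + b + c) ltac:(lia)).
  lia.
Qed.

Lemma rank_quad a b c A B E F :
  rank (quad a b c A B E F) <= rank (CAnd (CCap a A B) (CCap b E F)).
Proof.
  unfold quad; simpl.
  pose proof (rank_pos A); pose proof (rank_pos B); pose proof (rank_pos E); pose proof (rank_pos F).
  set (x := rank A) in *; set (y := rank B) in *; set (z := rank E) in *; set (w := rank F) in *.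
  assert (HS : x + y + (z + w) = S (x + y + z + w - 1)) by lia.
  rewrite HS. simpl.
  pose proof (Nat.pow_le_mono_r 5 (x + (z + w)) (x + y + z + w - 1) ltac:(lia) ltac:(lia)).
  pose proof (Nat.pow_le_mono_r 5 (y + (z + w)) (x + y + z + w - 1) ltac:(lia) ltac:(lia)).
  pose proof (Nat.pow_le_mono_r 5 (x + y + z) (x + y + z + w - 1) ltac:(lia) ltac:(lia)).
  pose proof (Nat.pow_le_mono_r 5 (x + y + w) (x + y + z + w - 1) ltac:(lia) ltac:(lia)).
  lia.
Qed.

Lemma wins_plug_mono has i X E E' :
  (wins has i E -> wins has i E') -> wins has i (plug X E) -> wins has i (plug X E').
Proof. induction X; simpl; intros H; try specialize (IHX H); tauto. Qed.

Lemma wins_plug_iff has i X E E' :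
  (wins has i E <-> wins has i E') -> (wins has i (plug X E) <-> wins has i (plug X E')).
Proof. intros [H1 H2]; split; apply wins_plug_mono; auto. Qed.

Lemma wins_ext h1 h2 i C :
  (forall k v, occurs k C -> (h1 k v <-> h2 k v)) -> wins h1 i C -> wins h2 i C.
Proof.
  induction C; simpl; intros H; auto.
  - intros [W|W]; [left|right]; [apply IHC1|apply IHC2]; auto.
  - intros [W1 W2]; split; [apply IHC1|apply IHC2]; auto.
  - assert (E0 := H (CConj c) false (or_introl eq_refl)).
    assert (E1 := H (CConj c) true (or_introl eq_refl)).
    assert (I1 : wins h1 i C1 -> wins h2 i C1) by (apply IHC1; auto).
    assert (I2 : wins h1 i C2 -> wins h2 i C2) by (apply IHC2; auto).
    tauto.
  - assert (E0 := H (CDisj c) false (or_introl eq_refl)).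
    assert (E1 := H (CDisj c) true (or_introl eq_refl)).
    assert (I1 : wins h1 i C1 -> wins h2 i C1) by (apply IHC1; auto).
    assert (I2 : wins h1 i C2 -> wins h2 i C2) by (apply IHC2; auto).
    tauto.
Qed.

Lemma disj_has_wins has i E L : disj_has E L -> wins has i L -> wins has i E.
Proof.
  induction E; simpl; intros [H|H]; subst; auto; try contradiction.
  destruct H; auto.
Qed.

Lemma run_upto_prefix M e r r' : r <= r' -> exists s, run_upto M e r ++ s = run_upto M e r'.
Proof.
  induction 1.
  - exists []; apply app_nil_r.
  - destruct IHle as [s Hs]. simpl. rewrite <- Hs.
    eexists. rewrite <- !app_assoc. reflexivity.
Qed.

Lemma in_run_iff M e k v : in_run M e k v <-> exists r l, In (l, (k, v)) (run_upto M e r).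
Proof.
  split.
  - intros (L & l & (r & s & Hs) & HI). exists r, l. rewrite <- Hs. apply in_or_app; auto.
  - intros (r & l & HI). exists (run_upto M e r), l. split; auto. exists r, []. apply app_nil_r.
Qed.

Lemma legal_app L s : legal (L ++ s) -> legal L.
Proof.
  intros [H1 H2]. split.
  - apply Forall_app in H1; tauto.
  - rewrite map_app in H2. eapply NoDup_app_remove_r; eauto.
Qed.

Lemma nodup_map_eq {A B : Type} (f : A -> B) L x y :
  NoDup (map f L) -> In x L -> In y L -> f x = f y -> x = y.
Proof.
  induction L; simpl; [tauto|]. intros HN Hx Hy Hf. inversion HN; subst.
  destruct Hx as [Hx|Hx]; destruct Hy as [Hy|Hy]; subst; auto.
  - exfalso; apply H1; rewrite Hf; apply in_map; auto.
  - exfalso; apply H1; rewrite <- Hf; apply in_map; auto.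
Qed.

Lemma consistent_run M e : (forall L, run_prefix M e L -> legal L) ->
  forall k, ~ (in_run M e k false /\ in_run M e k true).
Proof.
  intros HL k [H1 H2]. apply in_run_iff in H1, H2.
  destruct H1 as (r1 & l1 & H1). destruct H2 as (r2 & l2 & H2).
  destruct (run_upto_prefix M e r1 (Nat.max r1 r2) ltac:(lia)) as [s1 E1].
  destruct (run_upto_prefix M e r2 (Nat.max r1 r2) ltac:(lia)) as [s2 E2].
  assert (Hl : legal (run_upto M e (Nat.max r1 r2))).
  { apply HL. exists (Nat.max r1 r2), []. apply app_nil_r. }
  destruct Hl as [_ HN].
  assert (I1 : In (l1, (k, false)) (run_upto M e (Nat.max r1 r2))) by (rewrite <- E1; apply in_or_app; auto).
  assert (I2 : In (l2, (k, true)) (run_upto M e (Nat.max r1 r2))) by (rewrite <- E2; apply in_or_app; auto).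
  pose proof (nodup_map_eq _ _ _ _ HN I1 I2 eq_refl). congruence.
Qed.

Lemma valid_transfer C C' :
  (forall has i, (forall k, ~ (has k false /\ has k true)) -> wins has i C -> wins has i C') ->
  valid C -> valid C'.
Proof.
  intros H [M HM]. exists M. intros i e.
  destruct (HM i e) as [H1|[H1 H2]]; [left; exact H1| right; split; auto].
  apply H; auto. apply consistent_run; auto.
Qed.

(* ---------- simulation for the quadrilemma step ---------- *)
Definition clu (x : lmove) : cluster := fst (snd x).

Definition cleqb (k1 k2 : cluster) : bool :=
  match k1, k2 with
  | CConj n, CConj m => Nat.eqb n m
  | CDisj n, CDisj m => Nat.eqb n m
  | _, _ => false
  end.

Lemma cleqb_spec k1 k2 : cleqb k1 k2 = true <-> k1 = k2.
Proof.
  destruct k1, k2; simpl; rewrite ?Nat.eqb_eq; split; intros; subst; try congruence; auto.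
Qed.

Definition is_envc (c : nat) (x : lmove) : bool := negb (fst x) && cleqb (clu x) (CConj c).
Definition is_trig (a b : nat) (x : lmove) : bool :=
  negb (fst x) && (cleqb (clu x) (CConj a) || cleqb (clu x) (CConj b)).
Definition trigbit (a : nat) (x : lmove) : bool := negb (cleqb (clu x) (CConj a)).
Definition trig' a b c (x : lmove) : bool := negb (is_envc c x) && is_trig a b x.

Fixpoint tr a b c (st : bool) (L : list lmove) : list lmove :=
  match L with
  | [] => []
  | x :: L' =>
    if is_envc c x then tr a b c st L'
    else if negb st && is_trig a b x then (false, (CConj c, trigbit a x)) :: x :: tr a b c true L'
    else x :: tr a b c st L'
  end.

Lemma tr_app a b c st L1 L2 :
  tr a b c st (L1 ++ L2) = tr a b c st L1 ++ tr a b c (st || existsb (trig' a b c) L1) L2.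
Proof.
  revert st; induction L1 as [|x L1 IH]; intros st; simpl.
  - rewrite orb_false_r; reflexivity.
  - unfold trig' at 1. destruct (is_envc c x) eqn:Ee; simpl.
    + apply IH.
    + destruct st; simpl.
      * rewrite IH. reflexivity.
      * destruct (is_trig a b x); simpl; rewrite IH; simpl; reflexivity.
Qed.

Lemma tr_true_move a b c st m L : tr a b c st ((true, m) :: L) = (true, m) :: tr a b c st L.
Proof. unfold tr; fold tr. unfold is_envc, is_trig; simpl. destruct st; reflexivity. Qed.

Lemma tr_labels a b c st L :
  Forall (fun x => fst x = false) L -> Forall (fun x => fst x = false) (tr a b c st L).
Proof.
  revert st; induction L as [|x L IH]; intros st HF; simpl; auto.
  inversion HF; subst.
  destruct (is_envc c x); auto.
  destruct (negb st && is_trig a b x); auto.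
Qed.

Lemma map_false_snd (L : list lmove) :
  Forall (fun x => fst x = false) L -> map (fun m => (false, m)) (map snd L) = L.
Proof.
  induction 1; simpl; auto. rewrite IHForall. destruct x; simpl in *; subst; auto.
Qed.

Definition mach' a b c (M : machine) : machine := fun r L => M r (tr a b c false L).
Definition env' a b c (M : machine) (e : envir) : envir :=
  fun r => map snd (tr a b c (existsb (trig' a b c) (run_upto (mach' a b c M) e r))
                       (map (fun m => (false, m)) (e r))).

Lemma sim a b c M e r :
  run_upto M (env' a b c M e) r = tr a b c false (run_upto (mach' a b c M) e r).
Proof.
  induction r; simpl; auto.
  set (R := run_upto (mach' a b c M) e r) in *.
  assert (HE : map (fun m => (false, m)) (env' a b c M e r)
             = tr a b c (existsb (trig' a b c) R) (map (fun m => (false, m)) (e r))).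
  { unfold env'. fold R. apply map_false_snd. apply tr_labels.
    clear. induction (e r); simpl; constructor; auto. }
  rewrite HE, IHr.
  assert (Hp : tr a b c false R ++ tr a b c (existsb (trig' a b c) R) (map (fun m => (false, m)) (e r))
             = tr a b c false (R ++ map (fun m => (false, m)) (e r))).
  { rewrite tr_app. reflexivity. }
  rewrite Hp. change (mach' a b c M r ?L) with (M r (tr a b c false L)).
  destruct (M r (tr a b c false (R ++ map (fun m => (false, m)) (e r)))) as [m|] eqn:HM.
  - rewrite (tr_app a b c false (R ++ _) [(true, m)]). rewrite tr_true_move. reflexivity.
  - rewrite !app_nil_r. reflexivity.
Qed.

Lemma tr_in_keep a b c st L y : In y L -> clu y <> CConj c -> In y (tr a b c st L).
Proof.
  revert st; induction L as [|x L IH]; intros st HI Hc; simpl in *; [tauto|].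
  destruct HI as [HI|HI].
  - subst. destruct (is_envc c y) eqn:Ee.
    + unfold is_envc in Ee. apply andb_true_iff in Ee. destruct Ee as [_ Ee].
      apply cleqb_spec in Ee. contradiction.
    + destruct (negb st && is_trig a b y); simpl; auto.
  - destruct (is_envc c x); auto.
    destruct (negb st && is_trig a b x); simpl; auto.
Qed.

Lemma tr_in_back a b c st L y : In y (tr a b c st L) -> clu y <> CConj c -> In y L.
Proof.
  revert st; induction L as [|x L IH]; intros st HI Hc; simpl in *; [tauto|].
  destruct (is_envc c x); [right; eapply IH; eauto|].
  destruct (negb st && is_trig a b x); simpl in HI.
  - destruct HI as [HI|[HI|HI]]; [subst; unfold clu in Hc; simpl in Hc; congruence| auto| right; eapply IH; eauto].
  - destruct HI as [HI|HI]; auto. right; eapply IH; eauto.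
Qed.

Lemma tr_in_c a b c st L l v : In (l, (CConj c, v)) (tr a b c st L) ->
  (l = true /\ In (l, (CConj c, v)) L) \/
  (l = false /\ exists x, In x L /\ is_trig a b x = true /\ trigbit a x = v).
Proof.
  revert st; induction L as [|x L IH]; intros st HI; simpl in *; [tauto|].
  destruct (is_envc c x) eqn:Ee.
  - destruct (IH _ HI) as [[H1 H2]|[H1 (y & H2 & H3 & H4)]]; [left; auto| right; split; eauto].
  - destruct (negb st && is_trig a b x) eqn:Et; simpl in HI.
    + destruct HI as [HI|[HI|HI]].
      * inversion HI; subst. right; split; auto. exists x; split; auto. split; auto.
        apply andb_true_iff in Et; tauto.
      * subst x. unfold is_envc in Ee; simpl in Ee. destruct l; simpl in Ee.
        -- left; auto.
        -- rewrite Nat.eqb_refl in Ee; discriminate.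
      * destruct (IH _ HI) as [[H1 H2]|[H1 (y & H2 & H3 & H4)]]; [left; auto| right; split; eauto].
    + destruct HI as [HI|HI].
      * subst x. unfold is_envc in Ee; simpl in Ee. destruct l; simpl in Ee.
        -- left; auto.
        -- rewrite Nat.eqb_refl in Ee; discriminate.
      * destruct (IH _ HI) as [[H1 H2]|[H1 (y & H2 & H3 & H4)]]; [left; auto| right; split; eauto].
Qed.

Lemma tr_trig_c a b c L x : In x L -> is_trig a b x = true -> is_envc c x = false ->
  exists v, In (false, (CConj c, v)) (tr a b c false L).
Proof.
  induction L as [|y L IH]; intros HI Ht He; simpl in *; [tauto|].
  destruct (is_envc c y) eqn:Ee.
  - destruct HI as [HI|HI]; [subst; congruence| auto].
  - simpl. destruct (is_trig a b y) eqn:Ety; simpl.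
    + eexists; left; reflexivity.
    + destruct HI as [HI|HI]; [subst; congruence|].
      destruct (IH HI Ht He) as [v Hv]; exists v; simpl; auto.
Qed.

Lemma tr_legal_aux a b c st L :
  Forall lmove_legal L -> NoDup (map clu L) ->
  Forall lmove_legal (tr a b c st L) /\ NoDup (map clu (tr a b c st L)) /\
  (st = true -> ~ In (CConj c) (map clu (tr a b c st L))) /\
  (forall k, In k (map clu (tr a b c st L)) -> k = CConj c \/ In k (map clu L)).
Proof.
  revert st; induction L as [|x L IH]; intros st HF HN; simpl.
  - repeat split; auto; try constructor.
  - inversion HF; subst. inversion HN; subst.
    destruct (IH st H2 H4) as (F1 & N1 & C1 & K1).
    assert (Hxc : is_envc c x = false -> clu x <> CConj c).
    { intros Ee Hc. destruct x as [l [k v]]. unfold clu in Hc; simpl in Hc; subst k.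
      unfold is_envc in Ee; simpl in Ee. destruct l; simpl in *; [contradiction|].
      rewrite Nat.eqb_refl in Ee; discriminate. }
    destruct (is_envc c x) eqn:Ee.
    + repeat split; auto. intros k Hk. destruct (K1 k Hk); auto.
    + specialize (Hxc eq_refl).
      assert (Nx : ~ In (clu x) (map clu (tr a b c st L))).
      { intros Hin. destruct (K1 _ Hin); auto. }
      destruct (negb st && is_trig a b x) eqn:Et.
      * destruct st; simpl in Et; [discriminate|].
        destruct (IH true H2 H4) as (F2 & N2 & C2 & K2).
        assert (Nx2 : ~ In (clu x) (map clu (tr a b c true L))).
        { intros Hin. destruct (K2 _ Hin); auto. }
        simpl. repeat split.
        -- constructor; [simpl; exact I| constructor; auto].
        -- constructor.
           ++ simpl. intros [Hc|Hc]; [apply Hxc; unfold clu; auto| apply (C2 eq_refl Hc)].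
           ++ constructor; auto.
        -- discriminate.
        -- intros k [Hk|[Hk|Hk]]; subst; auto. destruct (K2 _ Hk); auto.
      * simpl. repeat split.
        -- constructor; auto.
        -- constructor; auto.
        -- intros Hs [Hc|Hc]; [apply Hxc; auto| apply (C1 Hs Hc)].
        -- intros k [Hk|Hk]; subst; auto. destruct (K1 _ Hk); auto.
Qed.

Lemma tr_legal a b c st L : legal L -> legal (tr a b c st L).
Proof. intros [H1 H2]. destruct (tr_legal_aux a b c st L H1 H2) as (? & ? & _). split; auto. Qed.

Lemma nodup_snoc {A : Type} (l : list A) y : NoDup l -> ~ In y l -> NoDup (l ++ [y]).
Proof.
  intros H1 H2. apply NoDup_app; auto. constructor; auto; constructor.
  intros x Hx [Hy|[]]; subst; auto.
Qed.

Lemma tr_illegal a b c L x : legal L -> ~ legal (L ++ [x]) -> fst x = true ->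
  ~ legal (tr a b c false L ++ [x]).
Proof.
  intros [HF HN] Hill Hx [HF' HN'].
  apply Forall_app in HF'. destruct HF' as [_ HFx]. inversion HFx; subst.
  apply Hill. split.
  - apply Forall_app; split; auto.
  - rewrite map_app. simpl. apply nodup_snoc; auto.
    intros Hin. rewrite map_app in HN'. simpl in HN'.
    apply NoDup_remove_2 in HN'. rewrite app_nil_r in HN'. apply HN'.
    apply in_map_iff in Hin. destruct Hin as [y [Hy Hyin]].
    apply in_map_iff. exists y; split; auto.
    apply tr_in_keep; auto.
    unfold clu; rewrite Hy. destruct x as [l [k v]]. unfold clu; simpl in *; subst l.
    destruct k; simpl in H1; [contradiction| discriminate].
Qed.

Lemma first_illegal L0 : ~ legal L0 ->
  exists L x s, L ++ [x] ++ s = L0 /\ legal L /\ ~ legal (L ++ [x]).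
Proof.
  induction L0 as [|y L0 IH] using rev_ind; intros H.
  - exfalso; apply H; split; constructor.
  - destruct (classic (legal L0)) as [HL|HL].
    + exists L0, y, []. rewrite app_nil_r. auto.
    + destruct (IH HL) as (L & x & s & E & H1 & H2). exists L, x, (s ++ [y]).
      rewrite <- E. rewrite !app_assoc. auto.
Qed.

Lemma prefix_cmp (L1 L2 s1 s2 W : list lmove) : L1 ++ s1 = W -> L2 ++ s2 = W ->
  (exists t, L1 ++ t = L2) \/ (exists t, L2 ++ t = L1).
Proof.
  revert L2 W; induction L1 as [|x L1 IH]; intros L2 W H1 H2.
  - left; exists L2; auto.
  - destruct L2 as [|y L2]; [right; exists (x :: L1); auto|].
    destruct W as [|w W]; [discriminate|].
    simpl in H1, H2. injection H1 as Hx H1. injection H2 as Hy H2.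
    destruct (IH L2 W H1 H2) as [[t Ht]|[t Ht]]; [left|right]; exists t; subst; auto.
Qed.

Lemma first_illegal_unique M e L1 x1 L2 x2 :
  run_prefix M e (L1 ++ [x1]) -> run_prefix M e (L2 ++ [x2]) ->
  legal L1 -> ~ legal (L1 ++ [x1]) -> legal L2 -> ~ legal (L2 ++ [x2]) -> x1 = x2.
Proof.
  intros (r1 & s1 & E1) (r2 & s2 & E2) G1 B1 G2 B2.
  destruct (run_upto_prefix M e r1 (Nat.max r1 r2) ltac:(lia)) as [t1 T1].
  destruct (run_upto_prefix M e r2 (Nat.max r1 r2) ltac:(lia)) as [t2 T2].
  rewrite <- E1, <- app_assoc in T1. rewrite <- E2, <- app_assoc in T2.
  destruct (prefix_cmp _ _ _ _ _ T1 T2) as [[t Ht]|[t Ht]].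
  - destruct t as [|z t] using rev_ind.
    + rewrite app_nil_r in Ht. apply app_inj_tail in Ht. tauto.
    + rewrite app_assoc in Ht. apply app_inj_tail in Ht. destruct Ht as [Ht _].
      exfalso; apply B1. rewrite <- Ht in G2. eapply legal_app; eauto.
  - destruct t as [|z t] using rev_ind.
    + rewrite app_nil_r in Ht. apply app_inj_tail in Ht. symmetry; tauto.
    + rewrite app_assoc in Ht. apply app_inj_tail in Ht. destruct Ht as [Ht _].
      exfalso; apply B2. rewrite <- Ht in G1. eapply legal_app; eauto.
Qed.

Lemma quad_back_wins (h : cluster -> bool -> Prop) i a b c A B E F :
  (h (CConj c) false -> h (CConj a) false \/ h (CConj a) true) ->
  (h (CConj c) true -> h (CConj b) false \/ h (CConj b) true) ->
  (~ h (CConj c) false -> ~ h (CConj c) true ->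
     ~ (h (CConj a) false \/ h (CConj a) true) /\ ~ (h (CConj b) false \/ h (CConj b) true)) ->
  wins h i (quad a b c A B E F) -> wins h i (CAnd (CCap a A B) (CCap b E F)).
Proof. unfold quad; simpl. intros H1 H2 H3. tauto. Qed.

Lemma quad_fwd_wins (h : cluster -> bool -> Prop) i a b c A B E F :
  wins h i (CAnd (CCap a A B) (CCap b E F)) -> wins h i (quad a b c A B E F).
Proof.
  unfold quad; simpl.
  destruct (classic (h (CConj c) false)); destruct (classic (h (CConj c) true)); tauto.
Qed.

Lemma valid_quad_back X a b c A B E F :
  ~ occurs (CConj c) (plug X (CAnd (CCap a A B) (CCap b E F))) ->
  valid (plug X (quad a b c A B E F)) -> valid (plug X (CAnd (CCap a A B) (CCap b E F))).
Proof.
  intros Hc [M HM].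
  assert (Hac : a <> c).
  { intros ->. apply Hc. apply occurs_plug. simpl. auto. }
  assert (Hbc : b <> c).
  { intros ->. apply Hc. apply occurs_plug. simpl. auto. }
  exists (mach' a b c M). intros i e.
  set (M' := mach' a b c M). set (e' := env' a b c M e).
  assert (Hsim : forall r, run_upto M e' r = tr a b c false (run_upto M' e r)) by (intros; apply sim).
  (* machine-first illegal in real run gives an illegal prefix in the virtual run *)
  assert (Hmach : forall L x, run_prefix M' e (L ++ [x]) -> legal L -> ~ legal (L ++ [x]) -> fst x = true ->
            run_prefix M e' (tr a b c false L ++ [x]) /\ legal (tr a b c false L) /\
            ~ legal (tr a b c false L ++ [x])).
  { intros L x (r & s & Hs) HL Hill Hx. split; [|split].
    - exists r, (tr a b c (existsb (trig' a b c) (L ++ [x])) s). rewrite Hsim, <- Hs.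
      rewrite tr_app. f_equal.
      rewrite tr_app. destruct x as [l m]; simpl in Hx; subst l.
      rewrite tr_true_move. reflexivity.
    - apply tr_legal; auto.
    - apply tr_illegal; auto. }
  destruct (classic (forall L, run_prefix M' e L -> legal L)) as [Hall|Hnot].
  2:{ apply not_all_ex_not in Hnot. destruct Hnot as [L0 Hnot].
      apply imply_to_and in Hnot. destruct Hnot as [(r & s0 & Hs0) Hnot].
      destruct (first_illegal L0 Hnot) as (L & x & s & Es & HL & Hill).
      assert (Hp : run_prefix M' e (L ++ [x])).
      { exists r, (s ++ s0). rewrite <- Hs0, <- Es. rewrite !app_assoc. reflexivity. }
      destruct (fst x) eqn:Hx.
      - exfalso. destruct (Hmach L x Hp HL Hill Hx) as (Vp & VL & Vill).
        destruct (HM i e') as [(L2 & x2 & H1 & H2 & H3 & H4)|[H1 H2]].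
        + pose proof (first_illegal_unique _ _ _ _ _ _ Vp H1 VL Vill H2 H3). congruence.
        + apply Vill. apply H1. exact Vp.
      - left. exists L, x. auto. }
  assert (Vall : forall L, run_prefix M e' L -> legal L).
  { intros L (r & s & Hs). rewrite Hsim in Hs. apply legal_app with s. rewrite Hs.
    apply tr_legal. apply Hall. exists r, []. apply app_nil_r. }
  right. split; auto.
  destruct (HM i e') as [(L2 & x2 & H1 & H2 & H3 & H4)|[_ Hw]].
  { exfalso. apply H3. apply Vall; auto. }
  set (h := in_run M' e). set (h' := in_run M e').
  assert (Hk : forall k v, k <> CConj c -> (h' k v <-> h k v)).
  { intros k v Hk. unfold h, h'. rewrite !in_run_iff. split.
    - intros (r & l & HI). exists r, l. rewrite Hsim in HI. eapply tr_in_back; eauto.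
    - intros (r & l & HI). exists r, l. rewrite Hsim. apply tr_in_keep; auto. }
  assert (Hvleg : forall r, legal (run_upto M e' r)).
  { intros r. apply Vall. exists r, []. apply app_nil_r. }
  assert (Hrleg : forall r, legal (run_upto M' e r)).
  { intros r. apply Hall. exists r, []. apply app_nil_r. }
  assert (Hcv : forall v, h' (CConj c) v -> exists x r, In x (run_upto M' e r) /\ is_trig a b x = true /\ trigbit a x = v).
  { intros v Hv. unfold h' in Hv. rewrite in_run_iff in Hv. destruct Hv as (r & l & HI).
    pose proof HI as HI'. rewrite Hsim in HI. apply tr_in_c in HI.
    destruct HI as [[-> _]|[-> (x & H1 & H2 & H3)]].
    - exfalso. destruct (Hvleg r) as [HF _]. rewrite Forall_forall in HF.
      apply (HF _ HI').
    - exists x, r; auto. }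
  assert (Htrig : forall x, is_trig a b x = true ->
             fst x = false /\ (clu x = CConj a \/ clu x = CConj b)).
  { intros x Ht. unfold is_trig in Ht. apply andb_true_iff in Ht. destruct Ht as [H1 H2].
    destruct (fst x); [discriminate|]. split; auto.
    apply orb_true_iff in H2. destruct H2 as [H2|H2]; apply cleqb_spec in H2; auto. }
  assert (Hmov : forall k x r, In x (run_upto M' e r) -> clu x = k -> h k (snd (snd x))).
  { intros k x r HI Hx. unfold h. apply in_run_iff. exists r, (fst x).
    destruct x as [l [k' v]]. unfold clu in Hx; simpl in *; subst; auto. }
  assert (H1 : h' (CConj c) false -> h' (CConj a) false \/ h' (CConj a) true).
  { intros Hv. destruct (Hcv _ Hv) as (x & r & HI & Ht & Hb).
    destruct (Htrig x Ht) as [_ Hcl].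
    unfold trigbit in Hb. destruct (cleqb (clu x) (CConj a)) eqn:Ea; [|discriminate].
    apply cleqb_spec in Ea. pose proof (Hmov _ _ _ HI Ea) as Hm.
    rewrite !Hk by congruence.
    destruct (snd (snd x)); auto. }
  assert (H2 : h' (CConj c) true -> h' (CConj b) false \/ h' (CConj b) true).
  { intros Hv. destruct (Hcv _ Hv) as (x & r & HI & Ht & Hb).
    destruct (Htrig x Ht) as [_ Hcl].
    unfold trigbit in Hb. destruct (cleqb (clu x) (CConj a)) eqn:Ea; [discriminate|].
    destruct Hcl as [Hcl|Hcl].
    { rewrite Hcl in Ea. simpl in Ea. rewrite Nat.eqb_refl in Ea. discriminate. }
    pose proof (Hmov _ _ _ HI Hcl) as Hm.
    rewrite !Hk by congruence.
    destruct (snd (snd x)); auto. }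
  assert (Hreal : forall k v, k = CConj a \/ k = CConj b -> h k v -> h' (CConj c) false \/ h' (CConj c) true).
  { intros k v Hk' Hv. unfold h in Hv. rewrite in_run_iff in Hv. destruct Hv as (r & l & HI).
    destruct l.
    - exfalso. destruct (Hrleg r) as [HF _]. rewrite Forall_forall in HF.
      specialize (HF _ HI). destruct Hk' as [->| ->]; exact HF.
    - assert (Ht : is_trig a b (false, (k, v)) = true).
      { unfold is_trig, clu; simpl. destruct Hk' as [->| ->]; simpl; rewrite Nat.eqb_refl; auto.
        apply orb_true_r. }
      assert (He : is_envc c (false, (k, v)) = false).
      { unfold is_envc, clu; simpl. destruct Hk' as [->| ->]; simpl; apply Nat.eqb_neq; auto. }
      destruct (tr_trig_c a b c _ _ HI Ht He) as [v' Hv'].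
      assert (h' (CConj c) v').
      { unfold h'. apply in_run_iff. exists r, false. rewrite Hsim. exact Hv'. }
      destruct v'; auto. }
  assert (H3 : ~ h' (CConj c) false -> ~ h' (CConj c) true ->
     ~ (h' (CConj a) false \/ h' (CConj a) true) /\ ~ (h' (CConj b) false \/ h' (CConj b) true)).
  { intros N1 N2. rewrite !Hk by congruence. split; intros [Hv|Hv];
      (destruct (Hreal _ _ (or_introl eq_refl) Hv) || destruct (Hreal _ _ (or_intror eq_refl) Hv)); auto. }
  assert (Hw' : wins h' i (plug X (CAnd (CCap a A B) (CCap b E F)))).
  { eapply wins_plug_mono; [|exact Hw]. apply quad_back_wins; auto. }
  eapply wins_ext; [|exact Hw'].
  intros k v Hocc. apply Hk. intros ->. contradiction.
Qed.

(* ---------- the relation preserved by every purification step ---------- *)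
Definition Rel D D' := (provable D' -> provable D) /\ (valid D <-> valid D') /\ rank D' <= rank D.

Lemma Rel_refl D : Rel D D.
Proof. repeat split; auto. Qed.
Lemma Rel_trans x y z : Rel x y -> Rel y z -> Rel x z.
Proof. unfold Rel; intros (A1 & B1 & C1) (A2 & B2 & C2); repeat split; try tauto; lia. Qed.

Lemma Rel_surf (pat : cirq -> cirq -> Prop) D D' :
  (forall E E', pat E E' -> impl E' E /\ (forall has i, wins has i E <-> wins has i E') /\ rank E' <= rank E) ->
  surf_change pat D D' -> Rel D D'.
Proof.
  intros H (X & E & E' & HX & Hp & -> & ->). destruct (H _ _ Hp) as (H1 & H2 & H3).
  repeat split.
  - apply H1.
  - apply valid_transfer. intros has i _ HW. eapply wins_plug_mono; [|exact HW]. apply H2.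
  - apply valid_transfer. intros has i _ HW. eapply wins_plug_mono; [|exact HW]. apply H2.
  - apply rank_plug_mono; auto.
Qed.

Ltac three := refine (conj _ (conj _ _)).

Lemma Rel_s1a D D' : s1a D D' -> Rel D D'.
Proof.
  apply Rel_surf. intros E E' (A & [-> | ->] & ->); three.
  - eapply impl_trans; [|apply impl_comm_or]. intros X H. eapply prov_rule; [exact H| apply r_id_or].
  - intros; simpl; tauto.
  - simpl. pose proof (pow5_gt (tet (rank A) 5)); pose proof (tet_ge (rank A)); lia.
  - intros X H. eapply prov_rule; [exact H| apply r_id_or].
  - intros; simpl; tauto.
  - simpl. pose proof (tet_ge (rank A + 1)); lia.
Qed.

Lemma Rel_s1b D D' : s1b D D' -> Rel D D'.
Proof.
  apply Rel_surf. intros E E' (A & [-> | ->] & ->); three.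
  - eapply impl_trans; [|apply impl_comm_and]. intros X H. eapply prov_rule; [exact H| apply r_dom_and].
  - intros; simpl; tauto.
  - apply rank_pos.
  - intros X H. eapply prov_rule; [exact H| apply r_dom_and].
  - intros; simpl; tauto.
  - apply rank_pos.
Qed.

Lemma Rel_s2 D D' : s2 D D' -> Rel D D'.
Proof.
  apply Rel_surf. intros E E' (A & B & C & [-> | ->] & ->); three.
  - intros X H. eapply prov_rule; [exact H| apply r_distr_and].
  - intros; simpl; tauto.
  - apply rank_s2; apply rank_pos.
  - eapply impl_trans; [|apply impl_comm_or]. intros X H. eapply prov_rule; [exact H| apply r_distr_and].
  - intros; simpl; tauto.
  - simpl. rewrite (Nat.add_comm (rank C)). apply rank_s2; apply rank_pos.
Qed.

Lemma wins_s3 has i c A B C :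
  wins has i (COr (CCap c A B) C) <-> wins has i (CCap c (COr A C) (COr B C)).
Proof.
  simpl. destruct (classic (has (CConj c) false)); destruct (classic (has (CConj c) true)); tauto.
Qed.

Lemma Rel_s3 D D' : s3 D D' -> Rel D D'.
Proof.
  apply Rel_surf. intros E E' (c & A & B & C & [-> | ->] & ->); three.
  - intros X H. eapply prov_rule; [exact H| apply r_distr_cap].
  - intros; apply wins_s3.
  - simpl. apply rank_s3; apply rank_pos.
  - eapply impl_trans; [|apply impl_comm_or]. intros X H. eapply prov_rule; [exact H| apply r_distr_cap].
  - intros has i. rewrite <- wins_s3. simpl; tauto.
  - simpl. assert (Heq : rank C + (rank A + rank B) = rank A + rank B + rank C) by lia.
    rewrite Heq. apply rank_s3; apply rank_pos.
Qed.

Lemma Rel_s4 D D' : s4 D D' -> Rel D D'.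
Proof.
  apply Rel_surf. intros E E' ((p & H1 & H2) & ->); three.
  - eapply good_pn; eauto.
  - intros has i. simpl. split; auto. intros _. destruct (i p) eqn:Hp.
    + apply disj_has_wins with (CPos p); auto.
    + apply disj_has_wins with (CNeg p); auto.
  - simpl. apply rank_pos.
Qed.

Lemma Rel_s5a D D' : s5a D D' -> Rel D D'.
Proof.
  apply Rel_surf. intros E E' (A & [-> | ->] & ->); three.
  - eapply impl_trans; [|apply impl_comm_or]. intros X H. eapply prov_rule; [exact H| apply r_dom_or].
  - intros; simpl; tauto.
  - apply rank_pos.
  - intros X H. eapply prov_rule; [exact H| apply r_dom_or].
  - intros; simpl; tauto.
  - apply rank_pos.
Qed.

Lemma Rel_s5b D D' : s5b D D' -> Rel D D'.
Proof.
  apply Rel_surf. intros E E' (A & [-> | ->] & ->); three.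
  - eapply impl_trans; [|apply impl_comm_and]. intros X H. eapply prov_rule; [exact H| apply r_id_and].
  - intros; simpl; tauto.
  - simpl rank. pose proof (pow5_gt (rank A)); lia.
  - intros X H. eapply prov_rule; [exact H| apply r_id_and].
  - intros; simpl; tauto.
  - simpl rank. pose proof (pow5_gt (rank A + 1)); lia.
Qed.

Lemma Rel_s6 D D' : s6 D D' -> Rel D D'.
Proof.
  intros (c & Hc & X & E & E' & HX & (a & b & A & B & E1 & F1 & -> & ->) & -> & ->).
  repeat split.
  - intros H. eapply prov_rule; [exact H| apply r_quad; exact Hc].
  - apply valid_transfer. intros has i _. apply wins_plug_mono. apply quad_fwd_wins.
  - apply valid_quad_back; auto.
  - apply rank_plug_mono. apply rank_quad.
Qed.

Lemma wins_s7 (h : cluster -> bool -> Prop) i X c E F A :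
  ~ (h (CConj c) false /\ h (CConj c) true) ->
  (wins h i (CCap c (plug X (CCap c E F)) A) <-> wins h i (CCap c (plug X E) A)) /\
  (wins h i (CCap c A (plug X (CCap c E F))) <-> wins h i (CCap c A (plug X F))).
Proof.
  intros Hn. simpl. split.
  - assert (K : h (CConj c) false -> (wins h i (plug X (CCap c E F)) <-> wins h i (plug X E))).
    { intros H0. apply wins_plug_iff. simpl. tauto. }
    tauto.
  - assert (K : h (CConj c) true -> (wins h i (plug X (CCap c E F)) <-> wins h i (plug X F))).
    { intros H0. apply wins_plug_iff. simpl. tauto. }
    tauto.
Qed.

Lemma Rel_s7 D D' : s7 D D' -> Rel D D'.
Proof.
  intros (X & c & E & F & A & [[-> ->]|[-> ->]]); repeat split.
  - intros H. eapply prov_rule; [exact H| apply (r_cleanse_l Hole)].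
  - apply valid_transfer. intros h i Hn. apply (wins_s7 h i X c E F A (Hn _)).
  - apply valid_transfer. intros h i Hn. apply (wins_s7 h i X c E F A (Hn _)).
  - simpl. pose proof (rank_plug_mono X (CCap c E F) E ltac:(simpl; lia)). lia.
  - intros H. eapply prov_rule; [exact H| apply (r_cleanse_r Hole)].
  - apply valid_transfer. intros h i Hn. apply (wins_s7 h i X c E F A (Hn _)).
  - apply valid_transfer. intros h i Hn. apply (wins_s7 h i X c E F A (Hn _)).
  - simpl. pose proof (rank_plug_mono X (CCap c E F) F ltac:(simpl; lia)). lia.
Qed.

Lemma Rel_opt (s : cirq -> cirq -> Prop) D D' : (forall D D', s D D' -> Rel D D') -> opt s D D' -> Rel D D'.
Proof. intros H [H1|[_ ->]]; auto using Rel_refl. Qed.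

Lemma Rel_iter2 (s t : cirq -> cirq -> Prop) D D' :
  (forall D D', s D D' -> Rel D D') -> (forall D D', t D D' -> Rel D D') -> iter2 s t D D' -> Rel D D'.
Proof. intros H1 H2 (D1 & o1 & o2). apply Rel_trans with D1; [apply (Rel_opt s)| apply (Rel_opt t)]; auto. Qed.

Lemma Rel_loop (it : cirq -> cirq -> Prop) D D' : (forall D D', it D D' -> Rel D D') -> loop it D D' -> Rel D D'.
Proof. intros H; induction 1; eauto using Rel_refl, Rel_trans. Qed.

Lemma surf_here (P : cirq -> Prop) E : P E -> surf P E.
Proof. destruct E; simpl; auto. Qed.

Lemma surf_plug (P : cirq -> Prop) X E : surface_ctx X -> surf P E -> surf P (plug X E).
Proof. induction X; simpl; tauto. Qed.

Lemma surf_ex (P : cirq -> Prop) D : surf P D -> exists X E, surface_ctx X /\ D = plug X E /\ P E.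
Proof.
  induction D; intros H; destruct H as [H0|H];
    try (exists Hole; eexists; split; [exact I| split; [reflexivity| exact H0]]);
    simpl in H; try contradiction.
  - destruct H as [H|H].
    + destruct (IHD1 H) as (X & E & H1 & H2 & H3). exists (XOrL X D2), E; simpl; subst; auto.
    + destruct (IHD2 H) as (X & E & H1 & H2 & H3). exists (XOrR D1 X), E; simpl; subst; auto.
  - destruct H as [H|H].
    + destruct (IHD1 H) as (X & E & H1 & H2 & H3). exists (XAndL X D2), E; simpl; subst; auto.
    + destruct (IHD2 H) as (X & E & H1 & H2 & H3). exists (XAndR D1 X), E; simpl; subst; auto.
Qed.

Lemma surf_trans (P Q : cirq -> Prop) D : surf P D -> (forall E, P E -> surf Q E) -> surf Q D.
Proof.
  intros H HPQ. destruct (surf_ex P D H) as (X & E & HX & -> & HE).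
  apply surf_plug; auto.
Qed.

Lemma pres_gen (P : cirq -> Prop) E E' :
  (surf P E' -> surf P E) ->
  (forall Z, surface_ctx Z -> Z <> Hole -> P (plug Z E') -> P (plug Z E)) ->
  forall X, surface_ctx X -> surf P (plug X E') -> surf P (plug X E).
Proof.
  intros H0 Hanc X. induction X; simpl; intros HX HS; try contradiction; auto.
  - destruct HS as [HS|[HS|HS]]; auto.
    left. apply (Hanc (XOrL X B)); simpl; auto; discriminate.
  - destruct HS as [HS|[HS|HS]]; auto.
    left. apply (Hanc (XOrR A X)); simpl; auto; discriminate.
  - destruct HS as [HS|[HS|HS]]; auto.
    left. apply (Hanc (XAndL X B)); simpl; auto; discriminate.
  - destruct HS as [HS|[HS|HS]]; auto.
    left. apply (Hanc (XAndR A X)); simpl; auto; discriminate.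
Qed.

Fixpoint andonly (X : ctx) : Prop :=
  match X with
  | Hole => True
  | XAndL X _ | XAndR _ X => andonly X
  | _ => False
  end.

Lemma pres_and (P : cirq -> Prop) E E' :
  (surf P E' -> surf P E) -> (forall U V, ~ P (CAnd U V)) ->
  forall X, andonly X -> surf P (plug X E') -> surf P (plug X E).
Proof.
  intros H0 HA X. induction X; simpl; intros HX HS; try contradiction; auto.
  - destruct HS as [HS|[HS|HS]]; auto. exfalso; eapply HA; eauto.
  - destruct HS as [HS|[HS|HS]]; auto. exfalso; eapply HA; eauto.
Qed.

Lemma plug_neq K X E : E <> K -> (forall U V, COr U V <> K) -> (forall U V, CAnd U V <> K) ->
  (forall c U V, CCap c U V <> K) -> (forall c U V, CCup c U V <> K) -> plug X E <> K.
Proof. destruct X; simpl; auto. Qed.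

Lemma plug_nbot X E : E <> CBot -> plug X E <> CBot.
Proof. intros; apply plug_neq; auto; discriminate. Qed.
Lemma plug_ntop X E : E <> CTop -> plug X E <> CTop.
Proof. intros; apply plug_neq; auto; discriminate. Qed.

Definition Pbot (E : cirq) : Prop := E = CBot.
Definition Ptop (E : cirq) : Prop := E = CTop.
Definition P2 (E : cirq) : Prop := match E with COr A B => surf is_and A \/ surf is_and B | _ => False end.
Definition P3 (E : cirq) : Prop := match E with COr A B => surf is_cap A \/ surf is_cap B | _ => False end.
Definition P4 (E : cirq) : Prop := exists p, disj_has E (CPos p) /\ disj_has E (CNeg p).

Definition I1 D := D <> CBot -> ~ surf Pbot D.
Definition I2 D := ~ surf P2 D.
Definition I3 D := ~ surf P3 D.
Definition I4 D := ~ surf P4 D.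
Definition I5 D := D <> CTop -> ~ surf Ptop D.

Lemma anc_bot E E' : forall Z, surface_ctx Z -> Z <> Hole -> Pbot (plug Z E') -> Pbot (plug Z E).
Proof. unfold Pbot; destruct Z; simpl; intros; try contradiction; try discriminate; congruence. Qed.
Lemma anc_top E E' : forall Z, surface_ctx Z -> Z <> Hole -> Ptop (plug Z E') -> Ptop (plug Z E).
Proof. unfold Ptop; destruct Z; simpl; intros; try contradiction; try discriminate; congruence. Qed.
Lemma anc_and E E' : forall Z, surface_ctx Z -> Z <> Hole -> is_and (plug Z E') -> is_and (plug Z E).
Proof. destruct Z; simpl; intros; try contradiction; auto. Qed.
Lemma anc_cap E E' : forall Z, surface_ctx Z -> Z <> Hole -> is_cap (plug Z E') -> is_cap (plug Z E).
Proof. destruct Z; simpl; intros; try contradiction; auto. Qed.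

Lemma anc_P2 E E' : (surf is_and E' -> surf is_and E) ->
  forall Z, surface_ctx Z -> Z <> Hole -> P2 (plug Z E') -> P2 (plug Z E).
Proof.
  intros H Z HZ HH. unfold P2. destruct Z; simpl in *; try contradiction; auto;
  (intros [K|K]; [left|right]; auto; eapply pres_gen; eauto using anc_and).
Qed.

Lemma anc_P3 E E' : (surf is_cap E' -> surf is_cap E) ->
  forall Z, surface_ctx Z -> Z <> Hole -> P3 (plug Z E') -> P3 (plug Z E).
Proof.
  intros H Z HZ HH. unfold P3. destruct Z; simpl in *; try contradiction; auto;
  (intros [K|K]; [left|right]; auto; eapply pres_gen; eauto using anc_cap).
Qed.

Definition is_lit (L : cirq) : Prop := match L with CPos _ | CNeg _ => True | _ => False end.

Lemma disj_plug Z E E' L : surface_ctx Z -> is_lit L ->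
  disj_has (plug Z E') L -> disj_has (plug Z E) L \/ disj_has E' L.
Proof.
  intros HZ HL. induction Z; simpl in *; try contradiction; auto.
  - intros [K|[K|K]]; [destruct L; simpl in HL; try contradiction; discriminate| |auto].
    destruct (IHZ HZ K); auto.
  - intros [K|[K|K]]; [destruct L; simpl in HL; try contradiction; discriminate|auto|].
    destruct (IHZ HZ K); auto.
  - intros [K|[]]; destruct L; simpl in HL; try contradiction; discriminate.
  - intros [K|[]]; destruct L; simpl in HL; try contradiction; discriminate.
Qed.

Lemma anc_P4_top E : forall Z, surface_ctx Z -> Z <> Hole -> P4 (plug Z CTop) -> P4 (plug Z E).
Proof.
  intros Z HZ _ (p & H1 & H2). exists p.
  destruct (disj_plug Z E CTop (CPos p) HZ I H1) as [K1|[K1|[]]]; [|discriminate].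
  destruct (disj_plug Z E CTop (CNeg p) HZ I H2) as [K2|[K2|[]]]; [|discriminate].
  auto.
Qed.

Lemma andonly_of_I2 X E : surface_ctx X -> is_and E -> ~ surf P2 (plug X E) -> andonly X.
Proof.
  intros HX HE. induction X; simpl in *; try contradiction; auto; intros HN.
  - exfalso. apply HN. left. unfold P2. left. apply surf_plug; auto. apply surf_here; auto.
  - exfalso. apply HN. left. unfold P2. right. apply surf_plug; auto. apply surf_here; auto.
  - apply IHX; auto.
  - apply IHX; auto.
Qed.

Ltac kill := let K := fresh "K" in
  intros K; unfold quad in K; simpl in K; unfold Pbot, Ptop, P2, P3, P4 in K; simpl in K;
  repeat match type of K with
         | _ \/ _ => destruct K as [K|K]
         | _ /\ _ => destruct K as [K ?]
         | exists _, _ => destruct K as [? K]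
         end;
  try discriminate; try contradiction;
  simpl; unfold Pbot, Ptop, P2, P3, P4 in *; simpl in *; tauto.

Lemma s2_inv D D' : s2 D D' -> I1 D -> I1 D'.
Proof.
  intros (X & E & E' & HX & (A & B & C & HE & ->) & -> & ->) H1 Hne Hs.
  apply (H1 (plug_nbot X E ltac:(destruct HE; subst; discriminate))).
  eapply pres_gen; [| apply anc_bot | exact HX | exact Hs].
  destruct HE; subst; kill.
Qed.

Lemma s3_inv D D' : s3 D D' -> I1 D /\ I2 D -> I1 D' /\ I2 D'.
Proof.
  intros (X & E & E' & HX & (c & A & B & C & HE & ->) & -> & ->) [H1 H2]. split.
  - intros Hne Hs. apply (H1 (plug_nbot X E ltac:(destruct HE; subst; discriminate))).
    eapply pres_gen; [| apply anc_bot | exact HX | exact Hs]. kill.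
  - intros Hs. apply H2. eapply pres_gen; [| apply anc_P2 | exact HX | exact Hs]; kill.
Qed.

Lemma P4_ntop E : P4 E -> E <> CTop /\ E <> CBot /\ 1 < csize E.
Proof.
  intros (p & H1 & H2). destruct E; simpl in *;
    try (destruct H1 as [H1|[]]; destruct H2 as [H2|[]]; congruence).
  assert (forall C, 1 <= csize C) by (intros C; destruct C; simpl; lia).
  pose proof (H E1); pose proof (H E2).
  repeat split; try discriminate; lia.
Qed.

Lemma s4_inv D D' : s4 D D' -> I1 D /\ I2 D /\ I3 D -> I1 D' /\ I2 D' /\ I3 D'.
Proof.
  intros (X & E & E' & HX & (HP & ->) & -> & ->) (H1 & H2 & H3).
  assert (HP' : P4 E) by exact HP. destruct (P4_ntop E HP') as (Nt & Nb & _).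
  split; [|split].
  - intros Hne Hs. apply (H1 (plug_nbot X E Nb)).
    eapply pres_gen; [| apply anc_bot | exact HX | exact Hs]. kill.
  - intros Hs. apply H2. eapply pres_gen; [| apply anc_P2 | exact HX | exact Hs]; kill.
  - intros Hs. apply H3. eapply pres_gen; [| apply anc_P3 | exact HX | exact Hs]; kill.
Qed.

Lemma s5a_inv D D' : s5a D D' -> I1 D /\ I2 D /\ I3 D /\ I4 D -> I1 D' /\ I2 D' /\ I3 D' /\ I4 D'.
Proof.
  intros (X & E & E' & HX & (A & HE & ->) & -> & ->) (H1 & H2 & H3 & H4).
  assert (Nb : E <> CBot) by (destruct HE; subst; discriminate).
  split; [|split; [|split]].
  - intros Hne Hs. apply (H1 (plug_nbot X E Nb)).
    eapply pres_gen; [| apply anc_bot | exact HX | exact Hs]. kill.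
  - intros Hs. apply H2. eapply pres_gen; [| apply anc_P2 | exact HX | exact Hs]; kill.
  - intros Hs. apply H3. eapply pres_gen; [| apply anc_P3 | exact HX | exact Hs]; kill.
  - intros Hs. apply H4. eapply pres_gen; [| apply anc_P4_top | exact HX | exact Hs]. kill.
Qed.

Lemma s5b_inv D D' : s5b D D' -> I1 D /\ I2 D /\ I3 D /\ I4 D -> I1 D' /\ I2 D' /\ I3 D' /\ I4 D'.
Proof.
  intros (X & E & E' & HX & (A & HE & ->) & -> & ->) (H1 & H2 & H3 & H4).
  assert (Nb : E <> CBot) by (destruct HE; subst; discriminate).
  assert (HA : andonly X) by (apply (andonly_of_I2 X E HX); [destruct HE; subst; exact I| exact H2]).
  assert (Hsub : forall P : cirq -> Prop, surf P A -> surf P E) by (intros P; destruct HE; subst; simpl; tauto).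
  split; [|split; [|split]].
  - intros Hne Hs. apply (H1 (plug_nbot X E Nb)).
    eapply pres_and; [apply Hsub| |exact HA|exact Hs]. intros U V K; discriminate.
  - intros Hs. apply H2. eapply pres_and; [apply Hsub| |exact HA|exact Hs]. intros U V K; exact K.
  - intros Hs. apply H3. eapply pres_and; [apply Hsub| |exact HA|exact Hs]. intros U V K; exact K.
  - intros Hs. apply H4. eapply pres_and; [apply Hsub| |exact HA|exact Hs].
    intros U V (p & K & _). destruct K as [K|[]]; discriminate.
Qed.

Lemma s6_inv D D' : s6 D D' -> I1 D /\ I2 D /\ I3 D /\ I4 D /\ I5 D ->
  I1 D' /\ I2 D' /\ I3 D' /\ I4 D' /\ I5 D'.
Proof.
  intros (c & Hc & X & E & E' & HX & (a & b & A & B & E1 & F1 & -> & ->) & -> & ->) (H1 & H2 & H3 & H4 & H5).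
  assert (HA : andonly X) by (apply (andonly_of_I2 X (CAnd (CCap a A B) (CCap b E1 F1)) HX); [exact I| exact H2]).
  split; [|split; [|split; [|split]]].
  - intros Hne Hs. apply (H1 (plug_nbot X (CAnd (CCap a A B) (CCap b E1 F1)) ltac:(discriminate))).
    refine (pres_and _ _ (quad a b c A B E1 F1) _ _ X HA Hs); [kill| intros U V K; discriminate].
  - intros Hs. apply H2. refine (pres_and _ _ (quad a b c A B E1 F1) _ _ X HA Hs); [kill| intros U V K; exact K].
  - intros Hs. apply H3. refine (pres_and _ _ (quad a b c A B E1 F1) _ _ X HA Hs); [kill| intros U V K; exact K].
  - intros Hs. apply H4. refine (pres_and _ _ (quad a b c A B E1 F1) _ _ X HA Hs); [kill|].
    intros U V (p & K & _). destruct K as [K|[]]; discriminate.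
  - intros Hne Hs. apply (H5 (plug_ntop X (CAnd (CCap a A B) (CCap b E1 F1)) ltac:(discriminate))).
    refine (pres_and _ _ (quad a b c A B E1 F1) _ _ X HA Hs); [kill| intros U V K; discriminate].
Qed.

Lemma k_parent K D : D <> K -> surf (fun E => E = K) D ->
  surf (fun E => exists A, E = COr K A \/ E = COr A K) D \/
  surf (fun E => exists A, E = CAnd K A \/ E = CAnd A K) D.
Proof.
  induction D; intros Hne Hs; destruct Hs as [Hs|Hs]; try contradiction; simpl in Hs; try contradiction.
  - destruct Hs as [Hs|Hs].
    + destruct (classic (D1 = K)) as [E|E].
      * left. apply surf_here. exists D2. left; subst; auto.
      * destruct (IHD1 E Hs) as [H|H]; [left|right]; simpl; auto.
    + destruct (classic (D2 = K)) as [E|E].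
      * left. apply surf_here. exists D1. right; subst; auto.
      * destruct (IHD2 E Hs) as [H|H]; [left|right]; simpl; auto.
  - destruct Hs as [Hs|Hs].
    + destruct (classic (D1 = K)) as [E|E].
      * right. apply surf_here. exists D2. left; subst; auto.
      * destruct (IHD1 E Hs) as [H|H]; [left|right]; simpl; auto.
    + destruct (classic (D2 = K)) as [E|E].
      * right. apply surf_here. exists D1. right; subst; auto.
      * destruct (IHD2 E Hs) as [H|H]; [left|right]; simpl; auto.
Qed.

Lemma fin1 D : (forall D', ~ s1a D D') -> (forall D', ~ s1b D D') -> I1 D.
Proof.
  intros N1 N2 Hne Hs. destruct (k_parent CBot D Hne Hs) as [H|H];
    apply surf_ex in H; destruct H as (X & E & HX & -> & A & HA).
  - apply (N1 (plug X A)). exists X, E, A. repeat split; auto. exists A; auto.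
  - apply (N2 (plug X CBot)). exists X, E, CBot. repeat split; auto. exists A; auto.
Qed.

Lemma fin5 D : (forall D', ~ s5a D D') -> (forall D', ~ s5b D D') -> I5 D.
Proof.
  intros N1 N2 Hne Hs. destruct (k_parent CTop D Hne Hs) as [H|H];
    apply surf_ex in H; destruct H as (X & E & HX & -> & A & HA).
  - apply (N1 (plug X CTop)). exists X, E, CTop. repeat split; auto. exists A; auto.
  - apply (N2 (plug X A)). exists X, E, A. repeat split; auto. exists A; auto.
Qed.

Definition Q2 (E : cirq) : Prop := exists A B C, E = COr (CAnd A B) C \/ E = COr C (CAnd A B).

Lemma P2_pat U : surf is_and U -> forall V, surf Q2 (COr U V) /\ surf Q2 (COr V U).
Proof.
  induction U; intros H V; destruct H as [H|H]; simpl in H; try contradiction.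
  - destruct H as [H|H].
    + split; simpl; right; [left|right]; apply IHU1; auto.
    + split; simpl; right; [left|right]; apply IHU2; auto.
  - split; apply surf_here; exists U1, U2, V; auto.
  - split; apply surf_here; exists U1, U2, V; auto.
Qed.

Lemma fin2 D : (forall D', ~ s2 D D') -> I2 D.
Proof.
  intros N Hs. assert (H : surf Q2 D).
  { apply (surf_trans P2); auto. intros E HE. destruct E; simpl in HE; try contradiction.
    destruct HE as [HE|HE]; [apply (P2_pat E1 HE E2)| apply (P2_pat E2 HE E1)]. }
  apply surf_ex in H. destruct H as (X & E & HX & -> & A & B & C & HE).
  apply (N (plug X (CAnd (COr A C) (COr B C)))). exists X, E, (CAnd (COr A C) (COr B C)).
  repeat split; auto. exists A, B, C; auto.
Qed.

Definition Q3 (E : cirq) : Prop := exists c A B C, E = COr (CCap c A B) C \/ E = COr C (CCap c A B).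

Lemma P3_pat U : surf is_cap U -> forall V,
  (surf P2 (COr U V) \/ surf Q3 (COr U V)) /\ (surf P2 (COr V U) \/ surf Q3 (COr V U)).
Proof.
  induction U; intros H V; destruct H as [H|H]; simpl in H; try contradiction.
  - destruct H as [H|H].
    + destruct (IHU1 H U2) as [[K|K] _]; split; simpl; auto.
    + destruct (IHU2 H U1) as [_ [K|K]]; split; simpl; auto.
  - split; left; apply surf_here; unfold P2; simpl; tauto.
  - split; right; apply surf_here; exists c, U1, U2, V; auto.
Qed.

Lemma fin3 D : (forall D', ~ s3 D D') -> I2 D -> I3 D.
Proof.
  intros N H2 Hs. assert (H : surf (fun E => surf P2 E \/ surf Q3 E) D).
  { apply (surf_trans P3); auto. intros E HE. apply surf_here. destruct E; simpl in HE; try contradiction.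
    destruct HE as [HE|HE]; [apply (P3_pat E1 HE E2)| apply (P3_pat E2 HE E1)]. }
  apply surf_ex in H. destruct H as (X & E & HX & -> & [HE|HE]).
  - apply H2. apply surf_plug; auto.
  - apply surf_ex in HE. destruct HE as (Y & G & HY & -> & c & A & B & C & HG).
    rewrite <- plug_comp in N.
    apply (N (plug (comp X Y) (CCap c (COr A C) (COr B C)))). exists (comp X Y), G, (CCap c (COr A C) (COr B C)).
    repeat split; auto.
    + clear - HX HY. induction X; simpl in *; auto.
    + exists c, A, B, C; auto.
Qed.

Lemma fin4 D : (forall D', ~ s4 D D') -> I4 D.
Proof.
  intros N Hs. apply surf_ex in Hs. destruct Hs as (X & E & HX & -> & HE).
  apply (N (plug X CTop)). exists X, E, CTop. repeat split; auto.
Qed.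

Fixpoint maxc (C : cirq) : nat :=
  match C with
  | COr A B | CAnd A B | CCup _ A B => Nat.max (maxc A) (maxc B)
  | CCap c A B => Nat.max c (Nat.max (maxc A) (maxc B))
  | _ => 0
  end.

Lemma maxc_occ k C : occurs (CConj k) C -> k <= maxc C.
Proof.
  induction C; simpl; intros H; try contradiction; try (destruct H as [H|H]; [apply IHC1 in H|apply IHC2 in H]; lia).
  - destruct H as [H|[H|H]]; [injection H; lia| apply IHC1 in H| apply IHC2 in H]; lia.
  - destruct H as [H|[H|H]]; [discriminate| apply IHC1 in H| apply IHC2 in H]; lia.
Qed.

Lemma fresh D : exists c, ~ occurs (CConj c) D.
Proof. exists (S (maxc D)). intros H. apply maxc_occ in H. lia. Qed.

Definition Q6 (E : cirq) : Prop := exists a b A B E1 F1, E = CAnd (CCap a A B) (CCap b E1 F1).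

Lemma cac B : conj_all_cap B -> is_cap B \/ surf Q6 B.
Proof.
  induction B; simpl; intros H; try contradiction; auto.
  destruct H as [H1 H2]. right.
  destruct (IHB1 H1) as [K1|K1]; [destruct (IHB2 H2) as [K2|K2]|].
  - left. destruct B1; try contradiction; destruct B2; try contradiction.
    do 6 eexists; reflexivity.
  - right; right; auto.
  - right; left; auto.
Qed.

Lemma fin6 D : (forall D', ~ s6 D D') -> forall A B, D = CAnd A B -> ~ (conj_all_cap A /\ conj_all_cap B).
Proof.
  intros N A B -> [HA HB].
  assert (H : surf Q6 (CAnd A B)).
  { destruct (cac A HA) as [K1|K1]; [destruct (cac B HB) as [K2|K2]|].
    - left. destruct A; try contradiction; destruct B; try contradiction. do 6 eexists; reflexivity.
    - right; right; auto.
    - right; left; auto. }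
  destruct (fresh (CAnd A B)) as [c Hc].
  apply surf_ex in H. destruct H as (X & E & HX & HD & a & b & A1 & B1 & E1 & F1 & HE).
  apply (N (plug X (quad a b c A1 B1 E1 F1))). exists c. split; auto.
  exists X, E, (quad a b c A1 B1 E1 F1). repeat split; auto. do 6 eexists; split; eauto.
Qed.

Lemma occ_inv c A : occurs (CConj c) A -> exists X E F, A = plug X (CCap c E F).
Proof.
  induction A; simpl; intros H; try contradiction.
  - destruct H as [H|H]; [destruct (IHA1 H) as (X & E & F & ->); exists (XOrL X A2)
                         | destruct (IHA2 H) as (X & E & F & ->); exists (XOrR A1 X)]; do 2 eexists; reflexivity.
  - destruct H as [H|H]; [destruct (IHA1 H) as (X & E & F & ->); exists (XAndL X A2)
                         | destruct (IHA2 H) as (X & E & F & ->); exists (XAndR A1 X)]; do 2 eexists; reflexivity.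
  - destruct H as [H|[H|H]].
    + injection H as ->. exists Hole; do 2 eexists; reflexivity.
    + destruct (IHA1 H) as (X & E & F & ->); exists (XCapL c0 X A2); do 2 eexists; reflexivity.
    + destruct (IHA2 H) as (X & E & F & ->); exists (XCapR c0 A1 X); do 2 eexists; reflexivity.
  - destruct H as [H|[H|H]]; [discriminate| |].
    + destruct (IHA1 H) as (X & E & F & ->); exists (XCupL c0 X A2); do 2 eexists; reflexivity.
    + destruct (IHA2 H) as (X & E & F & ->); exists (XCupR c0 A1 X); do 2 eexists; reflexivity.
Qed.

Lemma fin7 D : (forall D', ~ s7 D D') -> forall c A B, D = CCap c A B ->
  ~ occurs (CConj c) A /\ ~ occurs (CConj c) B.
Proof.
  intros N c A B -> . split; intros H; apply occ_inv in H; destruct H as (X & E & F & ->).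
  - apply (N (CCap c (plug X E) B)). exists X, c, E, F, B. left; auto.
  - apply (N (CCap c A (plug X F))). exists X, c, E, F, A. right; auto.
Qed.

Lemma csize_pos C : 1 <= csize C.
Proof. destruct C; simpl; lia. Qed.

Lemma sz_surf (pat : cirq -> cirq -> Prop) (cmp : nat -> nat -> Prop) D D' :
  (forall E E', pat E E' -> csize E' < csize E) -> surf_change pat D D' -> csize D' < csize D.
Proof. intros H (X & E & E' & _ & Hp & -> & ->). apply size_plug_lt; auto. Qed.

Lemma sz_surf_up (pat : cirq -> cirq -> Prop) D D' :
  (forall E E', pat E E' -> csize E < csize E') -> surf_change pat D D' -> csize D < csize D'.
Proof. intros H (X & E & E' & _ & Hp & -> & ->). apply size_plug_lt; auto. Qed.

Lemma sz_s1a D D' : s1a D D' -> csize D' < csize D.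
Proof. apply (sz_surf _ lt). intros E E' (A & [-> | ->] & ->); simpl; lia. Qed.
Lemma sz_s1b D D' : s1b D D' -> csize D' < csize D.
Proof. apply (sz_surf _ lt). intros E E' (A & [-> | ->] & ->); simpl; pose proof (csize_pos A); lia. Qed.
Lemma sz_s5a D D' : s5a D D' -> csize D' < csize D.
Proof. apply (sz_surf _ lt). intros E E' (A & [-> | ->] & ->); simpl; pose proof (csize_pos A); lia. Qed.
Lemma sz_s5b D D' : s5b D D' -> csize D' < csize D.
Proof. apply (sz_surf _ lt). intros E E' (A & [-> | ->] & ->); simpl; lia. Qed.
Lemma sz_s4 D D' : s4 D D' -> csize D' < csize D.
Proof. apply (sz_surf _ lt). intros E E' (HP & ->). destruct (P4_ntop E HP) as (_ & _ & H). simpl; lia. Qed.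
Lemma sz_s2 D D' : s2 D D' -> csize D < csize D'.
Proof. apply sz_surf_up. intros E E' (A & B & C & [-> | ->] & ->); simpl; pose proof (csize_pos C); lia. Qed.
Lemma sz_s3 D D' : s3 D D' -> csize D < csize D'.
Proof. apply sz_surf_up. intros E E' (c & A & B & C & [-> | ->] & ->); simpl; pose proof (csize_pos C); lia. Qed.
Lemma sz_s6 D D' : s6 D D' -> csize D < csize D'.
Proof.
  intros (c & _ & H). revert H. apply sz_surf_up.
  intros E E' (a & b & A & B & E1 & F1 & -> & ->). unfold quad; simpl.
  pose proof (csize_pos A); pose proof (csize_pos B); lia.
Qed.
Lemma sz_s7 D D' : s7 D D' -> csize D' < csize D.
Proof.
  intros (X & c & E & F & A & [[-> ->]|[-> ->]]); simpl;
  (assert (H : csize E < csize (CCap c E F) /\ csize F < csize (CCap c E F)) by (simpl; lia));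
  [pose proof (size_plug_lt X _ _ (proj1 H)) | pose proof (size_plug_lt X _ _ (proj2 H))]; lia.
Qed.

Lemma opt_fixed (s : cirq -> cirq -> Prop) D :
  (forall D D', s D D' -> csize D' <> csize D) -> opt s D D -> forall D', ~ s D D'.
Proof. intros H [K|[K _]]; [exfalso; apply (H D D K); auto| exact K]. Qed.

Lemma iter2_fixed (s t : cirq -> cirq -> Prop) D :
  (forall D D', s D D' -> csize D' < csize D) -> (forall D D', t D D' -> csize D' < csize D) ->
  iter2 s t D D -> (forall D', ~ s D D') /\ (forall D', ~ t D D').
Proof.
  intros Hs Ht (D1 & o1 & o2).
  destruct o1 as [K|[K ->]].
  - exfalso. pose proof (Hs _ _ K). destruct o2 as [K2|[_ ->]]; [pose proof (Ht _ _ K2)|]; lia.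
  - split; auto. destruct o2 as [K2|[K2 _]]; [pose proof (Ht _ _ K2); lia| auto].
Qed.

Lemma loop_final (it : cirq -> cirq -> Prop) D D2 : loop it D D2 -> it D2 D2.
Proof. induction 1; auto. Qed.

Lemma loop_inv (it : cirq -> cirq -> Prop) (I : cirq -> Prop) D D2 :
  (forall D D', it D D' -> I D -> I D') -> loop it D D2 -> I D -> I D2.
Proof. intros H; induction 1; eauto. Qed.

Lemma opt_inv (s : cirq -> cirq -> Prop) (I : cirq -> Prop) :
  (forall D D', s D D' -> I D -> I D') -> forall D D', opt s D D' -> I D -> I D'.
Proof. intros H D D' [K|[_ ->]]; eauto. Qed.

Lemma iter2_inv (s t : cirq -> cirq -> Prop) (I : cirq -> Prop) :
  (forall D D', s D D' -> I D -> I D') -> (forall D D', t D D' -> I D -> I D') ->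
  forall D D', iter2 s t D D' -> I D -> I D'.
Proof. intros H1 H2 D D' (D1 & o1 & o2) HI. eapply (opt_inv t); eauto. eapply (opt_inv s); eauto. Qed.

Lemma stage7_shape D B : loop (opt s7) D B -> B = D \/ is_cap B.
Proof.
  induction 1; auto.
  right. destruct H as [K|[_ ->]]; [|congruence].
  destruct K as (X & c & E & F & A & [[-> ->]|[-> ->]]); destruct IHloop as [->|K]; simpl; auto.
Qed.

Lemma pure_cap B : is_cap B -> (forall D', ~ s7 B D') -> pure B.
Proof.
  intros HB N. destruct B; try contradiction.
  unfold pure; simpl. refine (conj _ (conj _ (conj _ (conj _ (conj _ (conj _ _)))))).
  - intros _ [K|[]]; discriminate.
  - tauto.
  - tauto.
  - intros [(p & [K|[]] & _)|[]]; discriminate.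
  - intros _ [K|[]]; discriminate.
  - intros A B' K; discriminate.
  - intros c' A B' K. eapply fin7; eauto.
Qed.

Theorem lemma7p5 (A B : cirq) :
  purification A B ->
  (provable B -> provable A) /\ (valid A <-> valid B) /\ pure B /\ rank B <= rank A.
Proof.
  intros (D1 & D2 & D3 & D4 & D5 & D6 & L1 & L2 & L3 & L4 & L5 & L6 & L7).
  assert (HR : Rel A B).
  { apply Rel_trans with D1; [eapply Rel_loop; [|exact L1]; intros D D' H; exact (Rel_iter2 s1a s1b D D' Rel_s1a Rel_s1b H)|].
    apply Rel_trans with D2; [eapply Rel_loop; [|exact L2]; intros D D' H; exact (Rel_opt s2 D D' Rel_s2 H)|].
    apply Rel_trans with D3; [eapply Rel_loop; [|exact L3]; intros D D' H; exact (Rel_opt s3 D D' Rel_s3 H)|].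
    apply Rel_trans with D4; [eapply Rel_loop; [|exact L4]; intros D D' H; exact (Rel_opt s4 D D' Rel_s4 H)|].
    apply Rel_trans with D5; [eapply Rel_loop; [|exact L5]; intros D D' H; exact (Rel_iter2 s5a s5b D D' Rel_s5a Rel_s5b H)|].
    apply Rel_trans with D6; [eapply Rel_loop; [|exact L6]; intros D D' H; exact (Rel_opt s6 D D' Rel_s6 H)|].
    eapply Rel_loop; [|exact L7]; intros D D' H; exact (Rel_opt s7 D D' Rel_s7 H). }
  destruct HR as (HP & HV & HK). split; [exact HP|]. split; [exact HV|]. split; [|exact HK].
  assert (J1 : I1 D1).
  { destruct (iter2_fixed s1a s1b D1 sz_s1a sz_s1b (loop_final _ _ _ L1)) as [N1 N2]. apply fin1; auto. }
  assert (J2 : I1 D2 /\ I2 D2).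
  { split.
    - apply (loop_inv (opt s2) I1 D1 D2); [apply opt_inv; apply s2_inv| exact L2| exact J1].
    - apply fin2. apply (opt_fixed s2); [|apply (loop_final _ _ _ L2)].
      intros D D' K. pose proof (sz_s2 _ _ K); lia. }
  assert (J3 : (I1 D3 /\ I2 D3) /\ I3 D3).
  { assert (K3 : I1 D3 /\ I2 D3).
    { apply (loop_inv (opt s3) (fun D => I1 D /\ I2 D) D2 D3); [apply opt_inv; apply s3_inv| exact L3| exact J2]. }
    split; auto. apply fin3; [|tauto]. apply (opt_fixed s3); [|apply (loop_final _ _ _ L3)].
    intros D D' K. pose proof (sz_s3 _ _ K); lia. }
  assert (J4 : (I1 D4 /\ I2 D4 /\ I3 D4) /\ I4 D4).
  { assert (K4 : I1 D4 /\ I2 D4 /\ I3 D4).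
    { apply (loop_inv (opt s4) (fun D => I1 D /\ I2 D /\ I3 D) D3 D4); [apply opt_inv; apply s4_inv| exact L4| tauto]. }
    split; auto. apply fin4. apply (opt_fixed s4); [|apply (loop_final _ _ _ L4)].
    intros D D' K. pose proof (sz_s4 _ _ K); lia. }
  assert (J5 : (I1 D5 /\ I2 D5 /\ I3 D5 /\ I4 D5) /\ I5 D5).
  { assert (K5 : I1 D5 /\ I2 D5 /\ I3 D5 /\ I4 D5).
    { apply (loop_inv (iter2 s5a s5b) (fun D => I1 D /\ I2 D /\ I3 D /\ I4 D) D4 D5); [apply iter2_inv; [apply s5a_inv| apply s5b_inv]| exact L5| tauto]. }
    split; auto.
    destruct (iter2_fixed s5a s5b D5 sz_s5a sz_s5b (loop_final _ _ _ L5)) as [N1 N2]. apply fin5; auto. }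
  assert (K6 : I1 D6 /\ I2 D6 /\ I3 D6 /\ I4 D6 /\ I5 D6).
  { apply (loop_inv (opt s6) (fun D => I1 D /\ I2 D /\ I3 D /\ I4 D /\ I5 D) D5 D6); [apply opt_inv; apply s6_inv| exact L6| tauto]. }
  assert (N6 : forall D', ~ s6 D6 D').
  { apply (opt_fixed s6); [|apply (loop_final _ _ _ L6)].
    intros D D' K. pose proof (sz_s6 _ _ K); lia. }
  assert (N7 : forall D', ~ s7 B D').
  { apply (opt_fixed s7); [|apply (loop_final _ _ _ L7)].
    intros D D' K. pose proof (sz_s7 _ _ K); lia. }
  destruct (stage7_shape _ _ L7) as [->|Hc]; [|apply pure_cap; auto].
  destruct K6 as (H1 & H2 & H3 & H4 & H5).
  split; [exact H1|]. split; [exact H2|]. split; [exact H3|]. split; [exact H4|]. split; [exact H5|].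
  split; [apply fin6; auto| apply fin7; auto].
Qed.
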